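(* Let $G=\{g_t\}_{t\in\mathbb R}$ be a continuous one-parameter subgroup of the affine group $\mathcal G$ with a strongly continuous unitary representation $G\ni g\mapsto U_g$ on a separable Hilbert space, and let $\dot A$ be a $G$-invariant closed densely defined symmetric operator with deficiency indices $(1,1)$. Suppose that $\dot A$ has no self-adjoint $G$-invariant extension. Then there exists an element $g\in G$, different from the identity, such that, denoting by $G[g]$ the (discrete) cyclic subgroup generated by $g$, every maximal dissipative extension $A$ of $\dot A$ with $\dot A\subset A\subset(\dot A)^*$ (in particular every self-adjoint extension) is $G[g]$-invariant with respect to the restriction of the representation to $G[g]$.
   Context: $\mathcal G$ is the group (under composition) of affine maps $g(x)=ax+b$ of $\mathbb R$ with $a>0$, $b\in\mathbb R$; for an operator $A$, $g(A)=aA+bI$. For a subgroup $H\subset\mathcal G$ with unitary representation $h\mapsto U_h$, a densely defined closed operator $A$ is $H$-invariant if $U_h(\mathrm{Dom}(A))=\mathrm{Dom}(A)$ and $U_hAU_h^*f=aAf+bf$ for all $f\in\mathrm{Dom}(A)$ and all $h\in H$, $h(x)=ax+b$. An operator is maximal dissipative if $\operatorname{Im}(Af,f)\ge0$ on its domain and it has no proper dissipative extension. *)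

(* Defs.v *)
From Stdlib Require Import Reals ZArith.
From Coquelicot Require Import Coquelicot.

Set Implicit Arguments.
Local Open Scope R_scope.

(* Complex Hilbert spaces (inner product linear in the FIRST argument,  *)
(* conjugate-linear in the second), complete and separable.            *)
Record HilbertSpace := {
  hs :> Type;
  hzero : hs;
  hadd : hs -> hs -> hs;
  hopp : hs -> hs;
  hscal : C -> hs -> hs;
  hinner : hs -> hs -> C;
  hadd_assoc : forall x y z, hadd x (hadd y z) = hadd (hadd x y) z;
  hadd_comm : forall x y, hadd x y = hadd y x;
  hadd_zero : forall x, hadd x hzero = x;
  hadd_opp : forall x, hadd x (hopp x) = hzero;
  hscal_assoc : forall (a b : C) x, hscal a (hscal b x) = hscal (Cmult a b) x;
  hscal_one : forall x, hscal (RtoC 1) x = x;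
  hscal_distr_l : forall (a : C) x y, hscal a (hadd x y) = hadd (hscal a x) (hscal a y);
  hscal_distr_r : forall (a b : C) x, hscal (Cplus a b) x = hadd (hscal a x) (hscal b x);
  hinner_add_l : forall x y z, hinner (hadd x y) z = Cplus (hinner x z) (hinner y z);
  hinner_scal_l : forall (a : C) x y, hinner (hscal a x) y = Cmult a (hinner x y);
  hinner_conj : forall x y, hinner y x = Cconj (hinner x y);
  hinner_pos : forall x, 0 <= Re (hinner x x);
  hinner_definite : forall x, hinner x x = RtoC 0 -> x = hzero;
  hcomplete : forall u : nat -> hs,
    (forall eps, 0 < eps -> exists N, forall m n, (N <= m)%nat -> (N <= n)%nat ->
        sqrt (Re (hinner (hadd (u m) (hopp (u n))) (hadd (u m) (hopp (u n))))) < eps) ->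
    exists x, forall eps, 0 < eps -> exists N, forall n, (N <= n)%nat ->
        sqrt (Re (hinner (hadd (u n) (hopp x)) (hadd (u n) (hopp x)))) < eps;
  hseparable : exists d : nat -> hs, forall x eps, 0 < eps -> exists n,
        sqrt (Re (hinner (hadd x (hopp (d n))) (hadd x (hopp (d n))))) < eps
}.

Arguments hzero {h}.
Arguments hadd {h}.
Arguments hopp {h}.
Arguments hscal {h}.
Arguments hinner {h}.

Section HilbertDefs.
Variable H : HilbertSpace.

Definition hsub (x y : H) : H := hadd x (hopp y).
Definition hnorm (x : H) : R := sqrt (Re (hinner x x)).

Definition hconverges (u : nat -> H) (x : H) : Prop :=
  forall eps, 0 < eps -> exists N, forall n, (N <= n)%nat -> hnorm (hsub (u n) x) < eps.

(* The action outside the domain is irrelevant.                       *)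
Record Operator := { dom : H -> Prop; app : H -> H }.

Definition linear_op (A : Operator) : Prop :=
  dom A hzero /\
  (forall x y, dom A x -> dom A y -> dom A (hadd x y)) /\
  (forall (c : C) x, dom A x -> dom A (hscal c x)) /\
  (forall x y, dom A x -> dom A y -> app A (hadd x y) = hadd (app A x) (app A y)) /\
  (forall (c : C) x, dom A x -> app A (hscal c x) = hscal c (app A x)).

Definition densely_defined (A : Operator) : Prop :=
  forall x eps, 0 < eps -> exists y, dom A y /\ hnorm (hsub x y) < eps.

Definition closed_op (A : Operator) : Prop :=
  forall (u : nat -> H) x y, (forall n, dom A (u n)) ->
    hconverges u x -> hconverges (fun n => app A (u n)) y ->
    dom A x /\ app A x = y.

Definition symmetric_op (A : Operator) : Prop :=
  forall x y, dom A x -> dom A y -> hinner (app A x) y = hinner x (app A y).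

Definition op_le (A B : Operator) : Prop :=
  (forall x, dom A x -> dom B x) /\ (forall x, dom A x -> app B x = app A x).

Definition adjoint_graph (A : Operator) (y z : H) : Prop :=
  forall x, dom A x -> hinner (app A x) y = hinner x z.

Definition op_le_adjoint (B A : Operator) : Prop :=
  forall y, dom B y -> adjoint_graph A y (app B y).

Definition self_adjoint (A : Operator) : Prop :=
  linear_op A /\ densely_defined A /\
  forall y z, adjoint_graph A y z <-> (dom A y /\ app A y = z).

Definition defect_space (A : Operator) (z : C) (y : H) : Prop :=
  adjoint_graph A y (hscal z y).

Definition dim_one (K : H -> Prop) : Prop :=
  exists v, v <> hzero /\ K v /\ forall w, K w <-> exists c : C, w = hscal c v.

Definition deficiency_indices_1_1 (A : Operator) : Prop :=
  dim_one (defect_space A Ci) /\ dim_one (defect_space A (Copp Ci)).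

Definition dissipative (A : Operator) : Prop :=
  linear_op A /\ forall f, dom A f -> 0 <= Im (hinner (app A f) f).

Definition maximal_dissipative (A : Operator) : Prop :=
  dissipative A /\
  forall B, dissipative B -> op_le A B -> forall x, dom B x -> dom A x.

Definition unitary (U : H -> H) : Prop :=
  (forall x y, U (hadd x y) = hadd (U x) (U y)) /\
  (forall (c : C) x, U (hscal c x) = hscal c (U x)) /\
  (forall x y, hinner (U x) (U y) = hinner x y) /\
  (forall y, exists x, U x = y).

Definition is_adjoint_of (U V : H -> H) : Prop :=
  forall x y, hinner (U x) y = hinner x (V y).

End HilbertDefs.

Arguments dom {H}.
Arguments hsub {H}.
Arguments hnorm {H}.
Arguments hconverges {H}.
Arguments linear_op {H}.
Arguments densely_defined {H}.
Arguments closed_op {H}.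
Arguments symmetric_op {H}.
Arguments op_le {H}.
Arguments adjoint_graph {H}.
Arguments op_le_adjoint {H}.
Arguments self_adjoint {H}.
Arguments defect_space {H}.
Arguments dim_one {H}.
Arguments deficiency_indices_1_1 {H}.
Arguments dissipative {H}.
Arguments maximal_dissipative {H}.
Arguments unitary {H}.
Arguments is_adjoint_of {H}.
Arguments app {H}.

(* The affine group: g(x) = a x + b with a > 0, encoded as (a, b).     *)
(* A continuous one-parameter subgroup {g_t} is given by continuous    *)
(* a, b : R -> R with a > 0 and g_s o g_t = g_(s+t).                   *)
Definition one_param_affine_subgroup (a b : R -> R) : Prop :=
  continuity a /\ continuity b /\ (forall t, 0 < a t) /\
  (forall s t, a (s + t) = a s * a t) /\
  (forall s t, b (s + t) = a s * b t + b s).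

(* A strongly continuous unitary representation g_t |-> U t of the     *)
(* subgroup {g_t}: U only depends on the group element g_t.            *)
Definition strongly_cont_unitary_rep (H : HilbertSpace) (a b : R -> R)
    (U : R -> H -> H) : Prop :=
  (forall t, unitary (U t)) /\
  (forall s t, a s = a t -> b s = b t -> U s = U t) /\
  (forall s t x, U (s + t) x = U s (U t x)) /\
  (forall (f : H) t eps, 0 < eps -> exists delta, 0 < delta /\
     forall s, Rabs (s - t) < delta -> hnorm (hsub (U s f) (U t f)) < eps).

Definition invariant_on (H : HilbertSpace) (a b : R -> R) (U : R -> H -> H)
    (T : R -> Prop) (A : Operator H) : Prop :=
  forall t, T t ->
    (forall f, dom A f -> dom A (U t f)) /\
    (forall f, dom A f -> exists g, dom A g /\ U t g = f) /\
    (forall V, is_adjoint_of (U t) V -> forall f, dom A f ->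
       U t (app A (V f)) = hadd (hscal (RtoC (a t)) (app A f)) (hscal (RtoC (b t)) f)).

Definition cyclic_params (t0 : R) : R -> Prop :=
  fun t => exists n : Z, t = IZR n * t0.
Arguments strongly_cont_unitary_rep {H}.
Arguments invariant_on {H}.

(* Main.v *)
Require Import Defs.
From Stdlib Require Import Reals ZArith Lra Psatz ClassicalEpsilon Classical.
From Coquelicot Require Import Coquelicot.

Module P1.
Local Open Scope R_scope.
Set Implicit Arguments.
Local Open Scope R_scope.

Section Alg.
Context {H : HilbertSpace}.
Implicit Types x y z : H.

Lemma hadd_cancel_l x y z : hadd x y = hadd x z -> y = z.
Proof.
  intro E.
  rewrite <- (hadd_zero H y), <- (hadd_zero H z), <- (hadd_opp H x).
  rewrite (hadd_comm H x (hopp x)), !(hadd_assoc H), !(hadd_comm H _ (hopp x)).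
  rewrite <- !(hadd_assoc H), (hadd_comm H y x), (hadd_comm H z x), E. reflexivity.
Qed.

Lemma hadd_zero_l x : hadd hzero x = x.
Proof. rewrite hadd_comm; apply hadd_zero. Qed.

Lemma hscal_zero_c x : hscal (RtoC 0) x = hzero.
Proof.
  apply (hadd_cancel_l (hscal (RtoC 0) x)).
  rewrite hadd_zero, <- hscal_distr_r. f_equal. apply injective_projections; simpl; ring.
Qed.

Lemma hopp_scal x : hopp x = hscal (RtoC (-1)) x.
Proof.
  apply (hadd_cancel_l x). rewrite hadd_opp.
  transitivity (hadd (hscal (RtoC 1) x) (hscal (RtoC (-1)) x));
    [| rewrite hscal_one; reflexivity].
  rewrite <- hscal_distr_r.
  replace (Cplus (RtoC 1) (RtoC (-1))) with (RtoC 0) by (apply injective_projections; simpl; ring).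
  symmetry; apply hscal_zero_c.
Qed.

Lemma hscal_zero_v (c : C) : hscal c (@hzero H) = hzero.
Proof.
  rewrite <- (hscal_zero_c hzero), hscal_assoc. f_equal.
  apply injective_projections; simpl; ring.
Qed.

Lemma hinner_zero_l y : hinner (@hzero H) y = RtoC 0.
Proof.
  rewrite <- (hscal_zero_c hzero), hinner_scal_l.
  apply injective_projections; simpl; ring.
Qed.

Lemma hinner_add_r x y z : hinner x (hadd y z) = Cplus (hinner x y) (hinner x z).
Proof.
  rewrite hinner_conj, hinner_add_l, Cplus_conj, <- !hinner_conj. reflexivity.
Qed.

Lemma hinner_scal_r (c : C) x y : hinner x (hscal c y) = Cmult (Cconj c) (hinner x y).
Proof.
  rewrite hinner_conj, hinner_scal_l, Cmult_conj, <- hinner_conj. reflexivity.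
Qed.

Lemma hinner_opp_l x y : hinner (hopp x) y = Copp (hinner x y).
Proof.
  rewrite hopp_scal, hinner_scal_l. apply injective_projections; simpl; ring.
Qed.

Lemma hinner_opp_r x y : hinner x (hopp y) = Copp (hinner x y).
Proof.
  rewrite hopp_scal, hinner_scal_r. apply injective_projections; simpl; ring.
Qed.

Lemma hinner_zero_r x : hinner x (@hzero H) = RtoC 0.
Proof.
  rewrite hinner_conj, hinner_zero_l. apply injective_projections; simpl; ring.
Qed.

Lemma hinner_self_real x : hinner x x = RtoC (Re (hinner x x)).
Proof.
  pose proof (hinner_conj H x x) as E.
  destruct (hinner x x) as [p q] eqn:Ex. unfold Cconj in E; simpl in *.
  injection E; intros. apply injective_projections; simpl; lra.
Qed.

End Alg.

Ltac hexpand :=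
  repeat first
   [ rewrite hinner_add_l | rewrite hinner_add_r | rewrite hinner_scal_l
   | rewrite hinner_scal_r | rewrite hinner_opp_l | rewrite hinner_opp_r
   | rewrite hinner_zero_l | rewrite hinner_zero_r
   | rewrite Cplus_conj | rewrite Cmult_conj | rewrite Copp_conj | rewrite Cconj_conj
   | rewrite Cminus_conj ].

Section Vec.
Context {H : HilbertSpace}.
Implicit Types x y z : H.

Lemma vec_eq_of_inner x y : hinner (hsub x y) (hsub x y) = RtoC 0 -> x = y.
Proof.
  intro E. apply hinner_definite in E. unfold hsub in E.
  rewrite <- (hadd_zero H x), <- (hadd_opp H y), (hadd_comm H y), hadd_assoc, E.
  apply hadd_zero_l.
Qed.

End Vec.

Ltac hexpand_in Z :=
  repeat first
   [ rewrite hinner_add_l in Z | rewrite hinner_add_r in Z | rewrite hinner_scal_l in Z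
   | rewrite hinner_scal_r in Z | rewrite hinner_opp_l in Z | rewrite hinner_opp_r in Z
   | rewrite hinner_zero_l in Z | rewrite hinner_zero_r in Z
   | rewrite Cplus_conj in Z | rewrite Cmult_conj in Z | rewrite Copp_conj in Z
   | rewrite Cconj_conj in Z | rewrite Cminus_conj in Z ].

Ltac vecsolve :=
  apply vec_eq_of_inner; unfold hsub; hexpand;
  apply injective_projections; simpl; first [ring | field].

Lemma eq_via {H : HilbertSpace} (X Y D : H) : X = hadd Y D -> D = hzero -> X = Y.
Proof. intros E D0. rewrite E, D0. apply hadd_zero. Qed.

End P1.
Import P1.

Module P2.
Local Open Scope R_scope.
Set Implicit Arguments.
Local Open Scope R_scope.

Section Norm.
Context {H : HilbertSpace}.
Implicit Types x y z : H.

Definition nsq x := Re (hinner x x).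

Lemma nsq_ge0 x : 0 <= nsq x.
Proof. apply hinner_pos. Qed.

Lemma nsq_zero x : nsq x = 0 -> x = hzero.
Proof.
  intro E. apply hinner_definite. rewrite hinner_self_real. unfold nsq in E. rewrite E. reflexivity.
Qed.

Lemma Cmod_sq (c : C) : Cmod c ^ 2 = fst c ^ 2 + snd c ^ 2.
Proof. unfold Cmod. rewrite pow2_sqrt; [reflexivity| nra]. Qed.

Lemma CS_sq x y : Cmod (hinner x y) ^ 2 <= nsq x * nsq y.
Proof.
  destruct (Req_dec (nsq y) 0) as [Hy|Hy].
  - rewrite Hy. apply nsq_zero in Hy. subst y. rewrite hinner_zero_r.
    rewrite Cmod_0. nra.
  - assert (Hp : 0 < nsq y) by (pose proof (nsq_ge0 y); lra).
    pose proof (nsq_ge0 (hadd x (hopp (hscal (Cdiv (hinner x y) (RtoC (nsq y))) y)))) as Z.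
    unfold nsq in Z. hexpand_in Z.
    rewrite (hinner_self_real x), (hinner_self_real y) in Z.
    fold (nsq x) in Z. fold (nsq y) in Z.
    rewrite (hinner_conj H y x) in Z |- *. rewrite ?Cconj_conj in Z. rewrite Cmod_conj.
    rewrite Cmod_sq.
    destruct (hinner y x) as [p q]. set (a := nsq x) in *. set (b := nsq y) in *.
    unfold Cdiv, Cinv, Cmult, Cplus, Copp, Cconj, RtoC in Z. simpl in Z |- *.
    replace (b * (b * 1) + 0 * (0 * 1)) with (b*b) in Z by ring.
    replace (- 0 / (b*b)) with 0 in Z by (field; lra).
    replace (b / (b*b)) with (/b) in Z by (field; lra).
    assert (K : 0 <= a - (p*p+q*q) / b).
    { replace (a - (p*p+q*q)/b) with
       (a + - ((p * / b - - q * 0) * p - - (p * 0 + - q * / b) * - q) +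
   (- ((p * / b - - q * 0) * p - (p * 0 + - q * / b) * q) +
    - ((p * / b - - q * 0) * - ((p * / b - - q * 0) * b - - (p * 0 + - q * / b) * 0) -
       (p * 0 + - q * / b) * - ((p * / b - - q * 0) * 0 + - (p * 0 + - q * / b) * b)))) by (field; lra).
      exact Z. }
    apply (Rmult_le_reg_r (/b)). apply Rinv_0_lt_compat; lra.
    replace ((p ^ 2 + q ^ 2) * / b) with ((p*p+q*q)/b) by (unfold Rdiv; ring).
    replace (a * b * / b) with a by (field; lra). lra.
Qed.

Lemma hnorm_ge0 x : 0 <= hnorm x.
Proof. apply sqrt_pos. Qed.

Lemma hnorm_sq x : hnorm x ^ 2 = nsq x.
Proof. unfold hnorm. rewrite pow2_sqrt; [reflexivity| apply nsq_ge0]. Qed.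

Lemma CS x y : Cmod (hinner x y) <= hnorm x * hnorm y.
Proof.
  apply Rsqr_incr_0_var. 2: apply Rmult_le_pos; apply hnorm_ge0.
  unfold Rsqr. rewrite <- !Rsqr_pow2 || idtac.
  replace (Cmod (hinner x y) * Cmod (hinner x y)) with (Cmod (hinner x y) ^2) by ring.
  replace (hnorm x * hnorm y * (hnorm x * hnorm y)) with (hnorm x ^ 2 * hnorm y ^2) by ring.
  rewrite !hnorm_sq. apply CS_sq.
Qed.

Lemma Re_le_Cmod (c : C) : Re c <= Cmod c.
Proof. pose proof (re_le_Cmod c). pose proof (Rle_abs (Re c)). lra. Qed.

Lemma nsq_add x y : nsq (hadd x y) = nsq x + nsq y + 2 * Re (hinner x y).
Proof.
  unfold nsq. hexpand. rewrite (hinner_conj H y x).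
  destruct (hinner x y), (hinner x x), (hinner y y). simpl. ring.
Qed.

Lemma hnorm_triangle x y : hnorm (hadd x y) <= hnorm x + hnorm y.
Proof.
  apply Rsqr_incr_0_var. 2: pose proof (hnorm_ge0 x); pose proof (hnorm_ge0 y); lra.
  unfold Rsqr.
  replace (hnorm (hadd x y) * hnorm (hadd x y)) with (hnorm (hadd x y) ^2) by ring.
  replace ((hnorm x + hnorm y) * (hnorm x + hnorm y)) with
    (hnorm x ^2 + hnorm y ^2 + 2 * (hnorm x * hnorm y)) by ring.
  rewrite !hnorm_sq, nsq_add.
  pose proof (Re_le_Cmod (hinner x y)). pose proof (CS x y). lra.
Qed.

Lemma nsq_scal (c : C) x : nsq (hscal c x) = Cmod c ^ 2 * nsq x.
Proof.
  unfold nsq. hexpand. rewrite hinner_self_real. rewrite Cmod_sq.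
  destruct c. simpl. ring.
Qed.

Lemma hnorm_scal (c : C) x : hnorm (hscal c x) = Cmod c * hnorm x.
Proof.
  unfold hnorm. fold (nsq (hscal c x)). fold (nsq x). rewrite nsq_scal.
  rewrite sqrt_mult_alt. rewrite sqrt_pow2. reflexivity. apply Cmod_ge_0.
  apply pow2_ge_0.
Qed.

Lemma hnorm_opp x : hnorm (hopp x) = hnorm x.
Proof.
  rewrite hopp_scal, hnorm_scal. replace (Cmod (RtoC (-1))) with 1. ring.
  rewrite Cmod_R. rewrite Rabs_left by lra. ring.
Qed.

Lemma hnorm_zero : hnorm (@hzero H) = 0.
Proof. unfold hnorm. rewrite hinner_zero_l. simpl. apply sqrt_0. Qed.

Lemma hnorm_eq0 x : hnorm x = 0 -> x = hzero.
Proof.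
  intro E. apply nsq_zero. rewrite <- hnorm_sq, E. ring.
Qed.

Lemma hsub_sym x y : hnorm (hsub x y) = hnorm (hsub y x).
Proof.
  replace (hsub x y) with (hopp (hsub y x)). apply hnorm_opp.
  apply vec_eq_of_inner. unfold hsub. hexpand.
  apply injective_projections; simpl; ring.
Qed.

Lemma hsub_triangle x y z : hnorm (hsub x z) <= hnorm (hsub x y) + hnorm (hsub y z).
Proof.
  replace (hsub x z) with (hadd (hsub x y) (hsub y z)). apply hnorm_triangle.
  apply vec_eq_of_inner. unfold hsub. hexpand.
  apply injective_projections; simpl; ring.
Qed.

End Norm.

End P2.
Import P2.

Module P3.
Local Open Scope R_scope.
Set Implicit Arguments.
Local Open Scope R_scope.

Lemma small_inv (e : R) : 0 < e -> exists N : nat, forall n, (N <= n)%nat -> / (INR n + 1) < e.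
Proof.
  intro He. destruct (INR_archimed e 1 He) as [N HN]. exists N. intros n Hn.
  apply le_INR in Hn. pose proof (pos_INR N).
  apply (Rmult_lt_reg_r (INR n + 1)); [lra|]. rewrite Rinv_l by lra. nra.
Qed.

Arguments small_inv : clear implicits.

Lemma sqrt_lt_of_sq (a e : R) : 0 <= a -> 0 < e -> a < e * e -> sqrt a < e.
Proof.
  intros Ha He Hae. rewrite <- (sqrt_square e) by lra. apply sqrt_lt_1; nra.
Qed.

Lemma real_lim_le (r d : R) : 0 <= r -> 0 <= d ->
  (forall eps, 0 < eps -> r <= sqrt (d + eps) + eps) -> r * r <= d.
Proof.
  intros Hr Hd Hyp. destruct (Rle_or_lt (r*r) d) as [|Hgt]; [assumption|exfalso].
  set (g := r*r - d). set (K := sqrt (d+1)).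
  assert (HK : 0 <= K) by apply sqrt_pos.
  set (e := Rmin 1 (g / (2 * (2*K+2)))).
  assert (He : 0 < e). { unfold e. apply Rmin_glb_lt; [lra|]. unfold g. apply Rdiv_lt_0_compat; lra. }
  assert (He1 : e <= 1) by apply Rmin_l.
  assert (He2 : e <= g / (2 * (2*K+2))) by apply Rmin_r.
  specialize (Hyp e He).
  set (q := sqrt (d+e)) in Hyp.
  assert (Hq0 : 0 <= q) by apply sqrt_pos.
  assert (Hqq : q * q = d + e) by (apply sqrt_sqrt; lra).
  assert (HqK : q <= K) by (apply sqrt_le_1_alt; lra).
  assert (r*r <= (q+e)*(q+e)) by nra.
  assert (e * (2*K+2) <= g/2).
  { apply (Rmult_le_compat_r (2*K+2)) in He2; [|lra].
    replace (g / (2 * (2 * K + 2)) * (2 * K + 2)) with (g/2) in He2 by (field; lra). lra. }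
  unfold g in *. nra.
Qed.

Section Conv.
Context {H : HilbertSpace}.
Implicit Types x y z : H.
Implicit Types u v : nat -> H.

Definition hcauchy u := forall eps, 0 < eps -> exists N, forall m n, (N <= m)%nat -> (N <= n)%nat ->
    hnorm (hsub (u m) (u n)) < eps.

Lemma complete_conv u : hcauchy u -> exists x, hconverges u x.
Proof. intro C. apply (hcomplete H u C). Qed.

Lemma conv_cauchy u x : hconverges u x -> hcauchy u.
Proof.
  intros C eps He. destruct (C (eps/2)) as [N HN]; [lra|]. exists N. intros m n Hm Hn.
  pose proof (hsub_triangle (u m) x (u n)). rewrite (hsub_sym x (u n)) in H0.
  pose proof (HN m Hm). pose proof (HN n Hn). lra.
Qed.


Lemma hnorm_small_zero x : (forall eps, 0 < eps -> hnorm x < eps) -> x = hzero.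
Proof.
  intro Hs. apply hnorm_eq0. pose proof (hnorm_ge0 x).
  destruct (Req_dec (hnorm x) 0); auto. specialize (Hs (hnorm x)). lra.
Qed.

Lemma sub_zero x y : hsub x y = hzero -> x = y.
Proof.
  intro E. apply vec_eq_of_inner. rewrite E, hinner_zero_l. reflexivity.
Qed.

Lemma conv_unique u x y : hconverges u x -> hconverges u y -> x = y.
Proof.
  intros Cx Cy. apply sub_zero, hnorm_small_zero. intros eps He.
  destruct (Cx (eps/2)) as [N1 H1]; [lra|]. destruct (Cy (eps/2)) as [N2 H2]; [lra|].
  specialize (H1 (max N1 N2) (Nat.le_max_l _ _)). specialize (H2 (max N1 N2) (Nat.le_max_r _ _)).
  pose proof (hsub_triangle x (u (max N1 N2)) y). rewrite (hsub_sym x (u _)) in H0. lra.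
Qed.

Lemma conv_add u v x y : hconverges u x -> hconverges v y ->
  hconverges (fun n => hadd (u n) (v n)) (hadd x y).
Proof.
  intros Cx Cy eps He.
  destruct (Cx (eps/2)) as [N1 H1]; [lra|]. destruct (Cy (eps/2)) as [N2 H2]; [lra|].
  exists (max N1 N2). intros n Hn.
  specialize (H1 n (Nat.le_trans _ _ _ (Nat.le_max_l _ _) Hn)).
  specialize (H2 n (Nat.le_trans _ _ _ (Nat.le_max_r _ _) Hn)).
  replace (hsub (hadd (u n) (v n)) (hadd x y)) with (hadd (hsub (u n) x) (hsub (v n) y)).
  pose proof (hnorm_triangle (hsub (u n) x) (hsub (v n) y)). lra.
  apply vec_eq_of_inner. unfold hsub. hexpand. apply injective_projections; simpl; ring.
Qed.

Lemma conv_scal (c : C) u x : hconverges u x -> hconverges (fun n => hscal c (u n)) (hscal c x).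
Proof.
  intros Cx eps He.
  destruct (Cx (eps / (Cmod c + 1))) as [N HN].
  { apply Rdiv_lt_0_compat; [lra|]. pose proof (Cmod_ge_0 c); lra. }
  exists N. intros n Hn. specialize (HN n Hn).
  replace (hsub (hscal c (u n)) (hscal c x)) with (hscal c (hsub (u n) x)).
  rewrite hnorm_scal. pose proof (Cmod_ge_0 c). pose proof (hnorm_ge0 (hsub (u n) x)).
  apply Rle_lt_trans with ((Cmod c + 1) * hnorm (hsub (u n) x)). nra.
  apply (Rmult_lt_compat_l (Cmod c + 1)) in HN; [|lra].
  replace ((Cmod c + 1) * (eps / (Cmod c + 1))) with eps in HN by (field; lra). lra.
  apply vec_eq_of_inner. unfold hsub. hexpand. apply injective_projections; simpl; ring.
Qed.

Section Proj.
Variable S : H -> Prop.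
Hypothesis S0 : S hzero.
Hypothesis Sadd : forall x y, S x -> S y -> S (hadd x y).
Hypothesis Sscal : forall (c : C) x, S x -> S (hscal c x).
Hypothesis Sclosed : forall u x, (forall n, S (u n)) -> hconverges u x -> S x.

Lemma parallelogram y a b :
  nsq (hsub a b) + 4 * nsq (hsub y (hscal (RtoC (/2)) (hadd a b))) =
  2 * nsq (hsub y a) + 2 * nsq (hsub y b).
Proof.
  unfold nsq, hsub. hexpand. simpl. field.
Qed.

Lemma projection y : exists p, S p /\ forall s, S s -> hinner (hsub y p) s = RtoC 0.
Proof.
  set (E := fun r => exists s, S s /\ r = - nsq (hsub y s)).
  assert (Eb : bound E).
  { exists 0. intros r [s [_ ->]]. pose proof (nsq_ge0 (hsub y s)). lra. }
  assert (Ene : exists r, E r) by (exists (- nsq (hsub y hzero)); exists hzero; auto).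
  destruct (completeness E Eb Ene) as [m [Hub Hlub]].
  set (d := - m).
  assert (Hd : forall s, S s -> d <= nsq (hsub y s)).
  { intros s Ss. unfold d. assert (E (- nsq (hsub y s))) by (exists s; auto).
    specialize (Hub _ H0). lra. }
  assert (Hd0 : 0 <= d).
  { unfold d. assert (m <= 0). { apply Hlub. intros r [s [_ ->]].
      pose proof (nsq_ge0 (hsub y s)). lra. } lra. }
  assert (Hex : forall n : nat, exists s, S s /\ nsq (hsub y s) < d + / (INR n + 1)).
  { intro n. apply NNPP. intro Hn.
    assert (Hup : is_upper_bound E (m - / (INR n + 1))).
    { intros r [s [Ss ->]]. apply Rnot_lt_le. intro Hlt. apply Hn. exists s. split; auto.
      unfold d. lra. }
    specialize (Hlub _ Hup). pose proof (pos_INR n).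
    assert (0 < / (INR n + 1)) by (apply Rinv_0_lt_compat; lra). lra. }
  set (sq := fun n => proj1_sig (constructive_indefinite_description _ (Hex n))).
  assert (Hsq : forall n, S (sq n) /\ nsq (hsub y (sq n)) < d + / (INR n + 1)).
  { intro n. unfold sq. destruct constructive_indefinite_description; auto. }
  assert (Hcau : hcauchy sq).
  { intros eps He. destruct (@small_inv (eps * eps / 4)) as [N HN].
    { apply Rdiv_lt_0_compat; nra. }
    exists N. intros m' n Hm Hn. apply sqrt_lt_of_sq; [apply nsq_ge0|lra|].
    pose proof (parallelogram y (sq m') (sq n)) as P.
    destruct (Hsq m') as [S1 B1]. destruct (Hsq n) as [S2 B2].
    assert (S3 : S (hscal (RtoC (/2)) (hadd (sq m') (sq n)))) by auto.
    pose proof (Hd _ S3). pose proof (HN m' Hm) as HN1. pose proof (HN n Hn) as HN2.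
    change (nsq (hsub (sq m') (sq n)) < eps*eps). lra. }
  destruct (complete_conv Hcau) as [p Hp].
  assert (Sp : S p) by (eapply Sclosed; [intro n; apply Hsq | exact Hp]).
  assert (Hle : nsq (hsub y p) <= d).
  { rewrite <- hnorm_sq. replace (hnorm (hsub y p) ^ 2) with (hnorm (hsub y p) * hnorm (hsub y p)) by ring.
    apply real_lim_le; [apply hnorm_ge0|assumption|].
    intros eps He. destruct (small_inv eps He) as [N1 H1]. destruct (Hp eps He) as [N2 H2].
    set (n := max N1 N2).
    specialize (H1 n (Nat.le_max_l _ _)). specialize (H2 n (Nat.le_max_r _ _)).
    pose proof (hsub_triangle y (sq n) p).
    assert (hnorm (hsub y (sq n)) <= sqrt (d + eps)).
    { unfold hnorm. apply sqrt_le_1_alt. destruct (Hsq n). fold (nsq (hsub y (sq n))). lra. }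
    lra. }
  exists p. split; auto. intros s Ss.
  set (e := hsub y p). set (c := hinner e s).
  assert (Key : forall t : R, 0 < t -> 0 <= t * (Cmod c ^ 2) * (t * nsq s - 2)).
  { intros t Ht.
    assert (Sq : S (hadd p (hscal (Cmult (RtoC t) c) s))) by auto.
    specialize (Hd _ Sq).
    assert (Eq : nsq (hsub y (hadd p (hscal (Cmult (RtoC t) c) s))) =
              nsq e + t * (Cmod c ^ 2) * (t * nsq s - 2)).
    { unfold nsq, c, e, hsub. rewrite Cmod_sq. hexpand.
      rewrite (hinner_conj H s y), (hinner_conj H s p), (hinner_conj H p y).
      rewrite (hinner_self_real s).
      destruct (hinner y s), (hinner p s), (hinner y p). simpl. ring. }
    assert (nsq e <= d) by exact Hle. lra. }
  specialize (Key (/ (nsq s + 1))).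
  pose proof (nsq_ge0 s).
  assert (Ht : 0 < / (nsq s + 1)) by (apply Rinv_0_lt_compat; lra).
  specialize (Key Ht).
  assert (Hneg : / (nsq s + 1) * nsq s - 2 < 0).
  { assert (/ (nsq s + 1) * nsq s < 1).
    { apply (Rmult_lt_reg_l (nsq s + 1)); [lra|]. rewrite <- Rmult_assoc, Rinv_r by lra. lra. }
    lra. }
  assert (Cmod c ^ 2 <= 0).
  { destruct (Rle_or_lt (Cmod c ^ 2) 0) as [|Hpos]; [assumption|exfalso].
    assert (0 < / (nsq s + 1) * Cmod c ^ 2) by (apply Rmult_lt_0_compat; lra).
    assert (/ (nsq s + 1) * Cmod c ^ 2 * (/ (nsq s + 1) * nsq s - 2) < 0).
    { rewrite <- (Rmult_0_r (/ (nsq s + 1) * Cmod c ^ 2)). apply Rmult_lt_compat_l; lra. }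
    lra. }
  assert (Cmod c = 0) by (pose proof (Cmod_ge_0 c); nra).
  apply Cmod_eq_0. assumption.
Qed.

End Proj.
End Conv.

End P3.
Import P3.

Module P4.
Local Open Scope R_scope.
Set Implicit Arguments.
Local Open Scope R_scope.

Section Op.
Context {H : HilbertSpace} (Ad : Operator H).
Implicit Types x y z f g w : H.
Hypothesis Hlin : linear_op Ad.
Hypothesis Hdense : densely_defined Ad.
Hypothesis Hclosed : closed_op Ad.
Hypothesis Hsym : symmetric_op Ad.

Lemma dom_zero : dom Ad hzero.
Proof. apply Hlin. Qed.
Lemma dom_add x y : dom Ad x -> dom Ad y -> dom Ad (hadd x y).
Proof. apply Hlin. Qed.
Lemma dom_scal (c : C) x : dom Ad x -> dom Ad (hscal c x).
Proof. apply Hlin. Qed.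
Lemma app_add x y : dom Ad x -> dom Ad y -> app Ad (hadd x y) = hadd (app Ad x) (app Ad y).
Proof. apply Hlin. Qed.
Lemma app_scal (c : C) x : dom Ad x -> app Ad (hscal c x) = hscal c (app Ad x).
Proof. apply Hlin. Qed.
Lemma dom_sub x y : dom Ad x -> dom Ad y -> dom Ad (hsub x y).
Proof. intros. unfold hsub. rewrite hopp_scal. auto using dom_add, dom_scal. Qed.
Lemma app_sub x y : dom Ad x -> dom Ad y -> app Ad (hsub x y) = hsub (app Ad x) (app Ad y).
Proof.
  intros. unfold hsub. rewrite !hopp_scal, app_add, app_scal; auto using dom_scal.
Qed.

Lemma orth_dense w : (forall x, dom Ad x -> hinner x w = RtoC 0) -> w = hzero.
Proof.
  intro Ho. apply hnorm_eq0.
  pose proof (hnorm_ge0 w). destruct (Req_dec (hnorm w) 0) as [|Hne]; auto. exfalso.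
  assert (Hp : 0 < hnorm w) by lra.
  destruct (Hdense w Hp) as [x [Dx Hx]].
  assert (E : hinner w w = hinner (hsub w x) w).
  { unfold hsub. rewrite hinner_add_l, hinner_opp_l, (Ho x Dx).
    apply injective_projections; simpl; ring. }
  pose proof (CS (hsub w x) w). rewrite <- E in H1.
  pose proof (Re_le_Cmod (hinner w w)).
  fold (nsq w) in H2. rewrite <- hnorm_sq in H2.
  pose proof (hnorm_ge0 (hsub w x)).
  assert (hnorm w * hnorm w < hnorm w * hnorm w).
  { apply Rle_lt_trans with (hnorm (hsub w x) * hnorm w). nra.
    apply Rmult_lt_compat_r; lra. }
  lra.
Qed.

Lemma adj_add y1 z1 y2 z2 : adjoint_graph Ad y1 z1 -> adjoint_graph Ad y2 z2 ->
  adjoint_graph Ad (hadd y1 y2) (hadd z1 z2).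
Proof. intros A1 A2 x Dx. rewrite !hinner_add_r, A1, A2 by auto. reflexivity. Qed.

Lemma adj_scal (c : C) y z : adjoint_graph Ad y z -> adjoint_graph Ad (hscal c y) (hscal c z).
Proof. intros A1 x Dx. rewrite !hinner_scal_r, A1 by auto. reflexivity. Qed.

Lemma adj_sub y1 z1 y2 z2 : adjoint_graph Ad y1 z1 -> adjoint_graph Ad y2 z2 ->
  adjoint_graph Ad (hsub y1 y2) (hsub z1 z2).
Proof. intros A1 A2. unfold hsub. rewrite !hopp_scal. apply adj_add; auto using adj_scal. Qed.

Lemma adj_dom x : dom Ad x -> adjoint_graph Ad x (app Ad x).
Proof. intros Dx y Dy. apply Hsym; auto. Qed.

Lemma adj_unique y z1 z2 : adjoint_graph Ad y z1 -> adjoint_graph Ad y z2 -> z1 = z2.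
Proof.
  intros A1 A2. apply sub_zero, orth_dense. intros x Dx. unfold hsub.
  rewrite hinner_add_r, hinner_opp_r, <- A1, <- A2 by auto.
  apply injective_projections; simpl; ring.
Qed.

Definition Dstar f := exists z, adjoint_graph Ad f z.
Definition Astar f := epsilon (inhabits hzero) (fun z => adjoint_graph Ad f z).

Lemma Astar_spec f : Dstar f -> adjoint_graph Ad f (Astar f).
Proof. intro D. unfold Astar. apply epsilon_spec. exact D. Qed.

Lemma Astar_eq f z : adjoint_graph Ad f z -> Astar f = z.
Proof. intro A. apply (adj_unique (y:=f)); auto. apply Astar_spec. exists z; auto. Qed.

Lemma Dstar_dom x : dom Ad x -> Dstar x.
Proof. intro D. exists (app Ad x). apply adj_dom; auto. Qed.

Lemma Astar_dom x : dom Ad x -> Astar x = app Ad x.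
Proof. intro D. apply Astar_eq, adj_dom; auto. Qed.

Definition Srange y := exists x, dom Ad x /\ y = hadd (app Ad x) (hscal Ci x).


Lemma nsq_graph z : dom Ad z ->
  nsq (hadd (app Ad z) (hscal Ci z)) = nsq (app Ad z) + nsq z.
Proof.
  intro Dz. unfold nsq. hexpand. rewrite <- (Hsym z z Dz Dz).
  unfold Re; simpl. ring.
Qed.

Lemma hnorm_le_nsq x y : nsq x <= nsq y -> hnorm x <= hnorm y.
Proof. intro. apply sqrt_le_1_alt. exact H0. Qed.

Lemma conv_ext (u v : nat -> H) x : (forall n, u n = v n) -> hconverges u x -> hconverges v x.
Proof. intros E C eps He. destruct (C eps He) as [N HN]. exists N. intros n Hn. rewrite <- E. auto. Qed.

Lemma Srange_closed u y : (forall n, Srange (u n)) -> hconverges u y -> Srange y.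
Proof.
  intros Su Cu.
  set (xs := fun n => proj1_sig (constructive_indefinite_description _ (Su n))).
  assert (Hxs : forall n, dom Ad (xs n) /\ u n = hadd (app Ad (xs n)) (hscal Ci (xs n))).
  { intro n. unfold xs. destruct constructive_indefinite_description; auto. }
  assert (Hdiff : forall m n, hsub (u m) (u n) =
     hadd (app Ad (hsub (xs m) (xs n))) (hscal Ci (hsub (xs m) (xs n)))).
  { intros m n. destruct (Hxs m) as [D1 E1]. destruct (Hxs n) as [D2 E2].
    rewrite app_sub by auto. rewrite E1, E2. vecsolve. }
  pose proof (conv_cauchy Cu) as Ccu.
  assert (C1 : hcauchy xs).
  { intros eps He. destruct (Ccu eps He) as [N HN]. exists N. intros m n Hm Hn.
    specialize (HN m n Hm Hn). rewrite Hdiff in HN.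
    destruct (Hxs m) as [D1 _]. destruct (Hxs n) as [D2 _].
    assert (D3 : dom Ad (hsub (xs m) (xs n))) by (apply dom_sub; auto).
    pose proof (nsq_graph _ D3). pose proof (nsq_ge0 (app Ad (hsub (xs m) (xs n)))).
    assert (hnorm (hsub (xs m) (xs n)) <= hnorm (hadd (app Ad (hsub (xs m) (xs n))) (hscal Ci (hsub (xs m) (xs n))))).
    { apply hnorm_le_nsq. lra. }
    lra. }
  assert (C2 : hcauchy (fun n => app Ad (xs n))).
  { intros eps He. destruct (Ccu eps He) as [N HN]. exists N. intros m n Hm Hn.
    specialize (HN m n Hm Hn). rewrite Hdiff in HN.
    destruct (Hxs m) as [D1 _]. destruct (Hxs n) as [D2 _].
    assert (D3 : dom Ad (hsub (xs m) (xs n))) by (apply dom_sub; auto).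
    pose proof (nsq_graph _ D3). pose proof (nsq_ge0 (hsub (xs m) (xs n))).
    rewrite app_sub in * by auto.
    assert (hnorm (hsub (app Ad (xs m)) (app Ad (xs n))) <= hnorm (hadd (hsub (app Ad (xs m)) (app Ad (xs n))) (hscal Ci (hsub (xs m) (xs n))))).
    { apply hnorm_le_nsq. lra. }
    lra. }
  destruct (complete_conv C1) as [x Cx]. destruct (complete_conv C2) as [z Cz].
  destruct (Hclosed (fun n => proj1 (Hxs n)) Cx Cz) as [Dx Ex].
  exists x. split; auto.
  apply (conv_unique Cu). rewrite Ex.
  apply (conv_ext (u := fun n => hadd (app Ad (xs n)) (hscal Ci (xs n)))).
  { intro n. symmetry. apply Hxs. }
  apply conv_add; auto. apply conv_scal; auto.
Qed.


Lemma app_zero : app Ad hzero = hzero.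
Proof.
  rewrite <- (hscal_zero_c hzero). rewrite app_scal by apply dom_zero. rewrite !hscal_zero_c; reflexivity.
Qed.

Lemma Srange_zero : Srange hzero.
Proof. exists hzero. split. apply dom_zero. rewrite app_zero, hscal_zero_v. symmetry; apply hadd_zero. Qed.

Lemma Srange_add y1 y2 : Srange y1 -> Srange y2 -> Srange (hadd y1 y2).
Proof.
  intros [x1 [D1 E1]] [x2 [D2 E2]]. exists (hadd x1 x2). split. apply dom_add; auto.
  rewrite app_add, E1, E2 by auto. vecsolve.
Qed.

Lemma Srange_scal (c : C) y : Srange y -> Srange (hscal c y).
Proof.
  intros [x [D E]]. exists (hscal c x). split. apply dom_scal; auto.
  rewrite app_scal, E by auto. vecsolve.
Qed.

Lemma hsub_self x : hsub x x = hzero.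
Proof. unfold hsub. apply hadd_opp. Qed.

Lemma Cpair_eq (a b : C) : fst a = fst b -> snd a = snd b -> a = b.
Proof. intros. apply injective_projections; auto. Qed.

Variables vp vm : H.
Hypothesis Hvp0 : vp <> hzero.
Hypothesis Hvm0 : vm <> hzero.
Hypothesis Hvp : defect_space Ad Ci vp.
Hypothesis Hvm : defect_space Ad (Copp Ci) vm.
Hypothesis Hvpall : forall w, defect_space Ad Ci w -> exists c : C, w = hscal c vp.
Hypothesis Hvmall : forall w, defect_space Ad (Copp Ci) w -> exists c : C, w = hscal c vm.

Definition comb (f0 : H) (c1 c2 : C) := hadd f0 (hadd (hscal c1 vp) (hscal c2 vm)).

Lemma vN f : Dstar f -> exists f0 c1 c2, dom Ad f0 /\ f = comb f0 c1 c2.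
Proof.
  intro Df.
  set (y := hadd (Astar f) (hscal Ci f)).
  destruct (projection Srange Srange_zero Srange_add Srange_scal Srange_closed y) as [p [Sp Hort]].
  destruct Sp as [f0 [Df0 Ep]].
  assert (Hw : defect_space Ad Ci (hsub y p)).
  { intros x Dx.
    assert (Sx : Srange (hadd (app Ad x) (hscal Ci x))) by (exists x; auto).
    specialize (Hort _ Sx). hexpand_in Hort. hexpand.
    rewrite (hinner_conj H (hsub y p) (app Ad x)).
    rewrite (hinner_conj H (hsub y p) x).
    apply (f_equal fst) in Hort as H1. apply (f_equal snd) in Hort as H2.
    simpl in H1, H2 |- *. apply Cpair_eq; simpl; lra. }
  destruct (Hvpall Hw) as [c Ec].
  set (k := Cmult c (@pair R R 0 (- / 2))).
  set (g := hsub (hsub f f0) (hscal k vp)).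
  assert (Ag : adjoint_graph Ad g (hsub (hsub (Astar f) (app Ad f0)) (hscal k (hscal Ci vp)))).
  { apply adj_sub. apply adj_sub. apply Astar_spec; auto. apply adj_dom; auto. apply adj_scal; auto. }
  assert (Eg : hsub (hsub (Astar f) (app Ad f0)) (hscal k (hscal Ci vp)) = hscal (Copp Ci) g).
  { apply (@eq_via H _ _ (hsub (hsub y p) (hscal c vp))).
    - unfold g, k, y. rewrite Ep. vecsolve.
    - rewrite Ec. apply hsub_self. }
  rewrite Eg in Ag.
  destruct (Hvmall Ag) as [d Ed].
  exists f0, k, d. split; auto.
  apply (@eq_via H _ _ (hsub g (hscal d vm))).
  - unfold comb, g. vecsolve.
  - rewrite Ed. apply hsub_self.
Qed.


Lemma Dstar_add f g : Dstar f -> Dstar g -> Dstar (hadd f g).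
Proof. intros [z1 A1] [z2 A2]. exists (hadd z1 z2). apply adj_add; auto. Qed.
Lemma Dstar_scal (c : C) f : Dstar f -> Dstar (hscal c f).
Proof. intros [z1 A1]. exists (hscal c z1). apply adj_scal; auto. Qed.
Lemma Dstar_sub f g : Dstar f -> Dstar g -> Dstar (hsub f g).
Proof. intros [z1 A1] [z2 A2]. exists (hsub z1 z2). apply adj_sub; auto. Qed.
Lemma Astar_add f g : Dstar f -> Dstar g -> Astar (hadd f g) = hadd (Astar f) (Astar g).
Proof. intros. apply Astar_eq. apply adj_add; apply Astar_spec; auto. Qed.
Lemma Astar_scal (c : C) f : Dstar f -> Astar (hscal c f) = hscal c (Astar f).
Proof. intros. apply Astar_eq. apply adj_scal; apply Astar_spec; auto. Qed.
Lemma Astar_sub f g : Dstar f -> Dstar g -> Astar (hsub f g) = hsub (Astar f) (Astar g).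
Proof. intros. apply Astar_eq. apply adj_sub; apply Astar_spec; auto. Qed.

Lemma Dvp : Dstar vp. Proof. exists (hscal Ci vp). exact Hvp. Qed.
Lemma Dvm : Dstar vm. Proof. exists (hscal (Copp Ci) vm). exact Hvm. Qed.
Lemma Avp : Astar vp = hscal Ci vp. Proof. apply Astar_eq. exact Hvp. Qed.
Lemma Avm : Astar vm = hscal (Copp Ci) vm. Proof. apply Astar_eq. exact Hvm. Qed.

Lemma Dcomb f0 c1 c2 : dom Ad f0 -> Dstar (comb f0 c1 c2).
Proof.
  intro D. unfold comb. apply Dstar_add. apply Dstar_dom; auto.
  apply Dstar_add; apply Dstar_scal; [apply Dvp|apply Dvm].
Qed.

Lemma Acomb f0 c1 c2 : dom Ad f0 ->
  Astar (comb f0 c1 c2) = hadd (app Ad f0) (hadd (hscal c1 (hscal Ci vp)) (hscal c2 (hscal (Copp Ci) vm))).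
Proof.
  intro D. apply Astar_eq. unfold comb. apply adj_add. apply adj_dom; auto.
  apply adj_add; apply adj_scal; auto.
Qed.

Definition Kp := hinner vp vp.
Definition Km := hinner vm vm.

Lemma Kp_nz : Kp <> RtoC 0.
Proof. intro E. apply Hvp0. apply hinner_definite. exact E. Qed.
Lemma Km_nz : Km <> RtoC 0.
Proof. intro E. apply Hvm0. apply hinner_definite. exact E. Qed.

Definition phi f := hinner (hadd (Astar f) (hscal Ci f)) vp.
Definition psi f := hinner (hsub (Astar f) (hscal Ci f)) vm.

Lemma Adp x : dom Ad x -> hinner (app Ad x) vp = Cmult (Copp Ci) (hinner x vp).
Proof.
  intro D. rewrite (Hvp _ D). rewrite hinner_scal_r. f_equal. apply injective_projections; simpl; ring.
Qed.
Lemma Adm x : dom Ad x -> hinner (app Ad x) vm = Cmult Ci (hinner x vm).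
Proof.
  intro D. rewrite (Hvm _ D). rewrite hinner_scal_r. f_equal.
  apply injective_projections; simpl; ring.
Qed.

Lemma phi_comb f0 c1 c2 : dom Ad f0 -> phi (comb f0 c1 c2) = Cmult c1 (Cmult (RtoC 2) (Cmult Ci Kp)).
Proof.
  intro D. unfold phi. rewrite Acomb by auto. unfold comb. hexpand.
  rewrite (Adp _ D). unfold Kp. apply injective_projections; simpl; ring.
Qed.

Lemma psi_comb f0 c1 c2 : dom Ad f0 -> psi (comb f0 c1 c2) = Cmult c2 (Cmult (RtoC (-2)) (Cmult Ci Km)).
Proof.
  intro D. unfold psi. rewrite Acomb by auto. unfold comb, hsub. hexpand.
  rewrite (Adm _ D). unfold Km. apply injective_projections; simpl; ring.
Qed.

Ltac cnz := repeat split; first [ apply Kp_nz | apply Km_nz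
  | let E := fresh in intro E; injection E; intros; lra ].

Definition co1 f := Cdiv (phi f) (Cmult (RtoC 2) (Cmult Ci Kp)).
Definition co2 f := Cdiv (psi f) (Cmult (RtoC (-2)) (Cmult Ci Km)).

Lemma den1_nz : Cmult (RtoC 2) (Cmult Ci Kp) <> RtoC 0.
Proof.
  intro E. apply Kp_nz. apply (f_equal (fun q : C => Cmult (Cmult (RtoC (/2)) (Copp Ci)) q)) in E.
  cbv beta in E. transitivity (Cmult (Cmult (RtoC (/2)) (Copp Ci)) (Cmult (RtoC 2) (Cmult Ci Kp))).
  apply injective_projections; simpl; field. rewrite E. apply injective_projections; simpl; ring.
Qed.
Lemma den2_nz : Cmult (RtoC (-2)) (Cmult Ci Km) <> RtoC 0.
Proof.
  intro E. apply Km_nz. apply (f_equal (fun q : C => Cmult (Cmult (RtoC (-/2)) (Copp Ci)) q)) in E.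
  cbv beta in E. transitivity (Cmult (Cmult (RtoC (-/2)) (Copp Ci)) (Cmult (RtoC (-2)) (Cmult Ci Km))).
  apply injective_projections; simpl; field. rewrite E. apply injective_projections; simpl; ring.
Qed.

Lemma co1_comb f0 c1 c2 : dom Ad f0 -> co1 (comb f0 c1 c2) = c1.
Proof.
  intro D. unfold co1. rewrite phi_comb by auto. field; cnz.
Qed.
Lemma co2_comb f0 c1 c2 : dom Ad f0 -> co2 (comb f0 c1 c2) = c2.
Proof.
  intro D. unfold co2. rewrite psi_comb by auto. field; cnz.
Qed.

Lemma decomp f : Dstar f -> dom Ad (hsub f (hadd (hscal (co1 f) vp) (hscal (co2 f) vm))).
Proof.
  intro Df. destruct (vN Df) as [f0 [c1 [c2 [D E]]]]. rewrite E.
  rewrite co1_comb, co2_comb by auto.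
  replace (hsub (comb f0 c1 c2) (hadd (hscal c1 vp) (hscal c2 vm))) with f0; auto.
  symmetry. unfold comb. vecsolve.
Qed.

Lemma decomp_eq f : Dstar f -> exists f0, dom Ad f0 /\ f = comb f0 (co1 f) (co2 f).
Proof.
  intro Df. exists (hsub f (hadd (hscal (co1 f) vp) (hscal (co2 f) vm))). split.
  apply decomp; auto. unfold comb. vecsolve.
Qed.

Lemma phi_add f g : Dstar f -> Dstar g -> phi (hadd f g) = Cplus (phi f) (phi g).
Proof.
  intros. unfold phi. rewrite Astar_add by auto. hexpand.
  apply injective_projections; simpl; ring.
Qed.
Lemma phi_scal (c : C) f : Dstar f -> phi (hscal c f) = Cmult c (phi f).
Proof.
  intros. unfold phi. rewrite Astar_scal by auto. hexpand.
  apply injective_projections; simpl; ring.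
Qed.
Lemma psi_add f g : Dstar f -> Dstar g -> psi (hadd f g) = Cplus (psi f) (psi g).
Proof.
  intros. unfold psi, hsub. rewrite Astar_add by auto. hexpand.
  apply injective_projections; simpl; ring.
Qed.
Lemma psi_scal (c : C) f : Dstar f -> psi (hscal c f) = Cmult c (psi f).
Proof.
  intros. unfold psi, hsub. rewrite Astar_scal by auto. hexpand.
  apply injective_projections; simpl; ring.
Qed.

Lemma co1_add f g : Dstar f -> Dstar g -> co1 (hadd f g) = Cplus (co1 f) (co1 g).
Proof. intros. unfold co1. rewrite phi_add by auto. field; cnz. Qed.
Lemma co2_add f g : Dstar f -> Dstar g -> co2 (hadd f g) = Cplus (co2 f) (co2 g).
Proof. intros. unfold co2. rewrite psi_add by auto. field; cnz. Qed.
Lemma co1_scal (c : C) f : Dstar f -> co1 (hscal c f) = Cmult c (co1 f).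
Proof. intros. unfold co1. rewrite phi_scal by auto. field; cnz. Qed.
Lemma co2_scal (c : C) f : Dstar f -> co2 (hscal c f) = Cmult c (co2 f).
Proof. intros. unfold co2. rewrite psi_scal by auto. field; cnz. Qed.

Lemma co_dom x : dom Ad x -> co1 x = RtoC 0 /\ co2 x = RtoC 0.
Proof.
  intro D. replace x with (comb x (RtoC 0) (RtoC 0)).
  rewrite co1_comb, co2_comb; auto.
  unfold comb. rewrite !hscal_zero_c, hadd_zero, hadd_zero. reflexivity.
Qed.

Lemma co_zero_dom f : Dstar f -> co1 f = RtoC 0 -> co2 f = RtoC 0 -> dom Ad f.
Proof.
  intros Df E1 E2. pose proof (decomp Df) as D. rewrite E1, E2, !hscal_zero_c, hadd_zero in D.
  unfold hsub in D. replace (hopp (@hzero H)) with (@hzero H) in D. rewrite hadd_zero in D. exact D.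
  rewrite hopp_scal, hscal_zero_v. reflexivity.
Qed.

Definition om f g := Cminus (hinner (Astar f) g) (hinner f (Astar g)).

Lemma om_coords f g : Dstar f -> Dstar g ->
  om f g = Cmult (Cmult (RtoC 2) Ci)
     (Cminus (Cmult Kp (Cmult (co1 f) (Cconj (co1 g)))) (Cmult Km (Cmult (co2 f) (Cconj (co2 g))))).
Proof.
  intros Df Dg.
  destruct (decomp_eq Df) as [f0 [Df0 Ef]]. destruct (decomp_eq Dg) as [g0 [Dg0 Eg]].
  set (a1 := co1 f) in *. set (a2 := co2 f) in *. set (b1 := co1 g) in *. set (b2 := co2 g) in *.
  unfold om. rewrite Ef, Eg.
  rewrite !Acomb by auto. unfold comb. hexpand.
  rewrite (Hsym f0 g0 Df0 Dg0).
  rewrite (Adp _ Df0), (Adm _ Df0).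
  rewrite (hinner_conj H g0 vp), (hinner_conj H g0 vm), (hinner_conj H vp vm).
  rewrite (hinner_conj H (app Ad g0) vp), (hinner_conj H (app Ad g0) vm).
  rewrite (Adp _ Dg0), (Adm _ Dg0).
  unfold Kp, Km.
  apply injective_projections; simpl; ring.
Qed.

End Op.

End P4.
Import P4.

Module P6.
Local Open Scope R_scope.
Set Implicit Arguments.
Local Open Scope R_scope.

Lemma Csqrt_ex (z : C) : exists s : C, Cmult s s = z.
Proof.
  destruct z as [x y].
  set (m := sqrt (x*x + y*y)).
  assert (Hm : 0 <= m) by apply sqrt_pos.
  assert (Hmm : m * m = x*x + y*y) by (apply sqrt_sqrt; nra).
  assert (Hx1 : x <= m) by nra. assert (Hx2 : - x <= m) by nra.
  set (s1 := sqrt ((m + x)/2)). set (s2 := sqrt ((m - x)/2)).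
  assert (E1 : s1 * s1 = (m + x)/2) by (apply sqrt_sqrt; lra).
  assert (E2 : s2 * s2 = (m - x)/2) by (apply sqrt_sqrt; lra).
  assert (P1 : 0 <= s1) by apply sqrt_pos. assert (P2 : 0 <= s2) by apply sqrt_pos.
  assert (E3 : (s1 * s2) * (s1 * s2) = (y * y)/4).
  { replace ((s1 * s2) * (s1 * s2)) with ((s1*s1)*(s2*s2)) by ring. rewrite E1, E2.
    field_simplify. nra. }
  assert (E4 : s1 * s2 = Rabs y / 2).
  { apply Rsqr_inj. nra. unfold Rdiv. apply Rmult_le_pos. apply Rabs_pos. lra.
    unfold Rsqr. rewrite E3. replace (Rabs y / 2 * (Rabs y / 2)) with ((Rabs y * Rabs y)/4) by field.
    rewrite <- Rabs_mult, Rabs_right by nra. reflexivity. }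
  destruct (Rle_or_lt 0 y) as [Hy|Hy].
  - exists (s1, s2). apply injective_projections; simpl.
    + nra.
    + rewrite Rabs_right in E4 by lra. nra.
  - exists (s1, - s2). apply injective_projections; simpl.
    + nra.
    + rewrite Rabs_left in E4 by lra. nra.
Qed.

Open Scope C_scope.

Ltac cnz0 := let E := fresh in intro E; first [ apply (f_equal fst) in E; simpl in E; lra
  | unfold RtoC in E; apply (f_equal fst) in E; simpl in E; lra
  | apply (f_equal (@fst R R)) in E; simpl in E; lra | lra ].

Lemma Ceq_div (l m : C) (v : C) : v <> 0 -> l * v = m * v -> l = m.
Proof.
  intros Hv E. apply (f_equal (fun z => z / v)) in E. simpl in E.
  replace l with (l * v / v) by (field; auto). rewrite E. field; auto.
Qed.

Lemma C_integral (x y : C) : x * y = 0 -> x = 0 \/ y = 0.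
Proof.
  intro E. destruct (classic (x = 0)) as [|Hx]; [left; auto | right].
  replace y with (/x * (x * y)) by (field; auto). rewrite E. ring.
Qed.

Lemma sys2 (x y v1 v2 u1 u2 : C) : x * v1 + y * v2 = 0 -> x * u1 + y * u2 = 0 ->
  v1 * u2 - v2 * u1 <> 0 -> x = 0 /\ y = 0.
Proof.
  intros E1 E2 Hd. split.
  - apply (Ceq_div Hd). replace (0 * (v1 * u2 - v2 * u1)) with (RtoC 0) by ring.
    replace (x * (v1 * u2 - v2 * u1)) with ((x * v1 + y * v2) * u2 - (x * u1 + y * u2) * v2) by ring.
    rewrite E1, E2. ring.
  - apply (Ceq_div Hd). replace (0 * (v1 * u2 - v2 * u1)) with (RtoC 0) by ring.
    replace (y * (v1 * u2 - v2 * u1)) with ((x * u1 + y * u2) * v1 - (x * v1 + y * v2) * u1) by ring.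
    rewrite E1, E2. ring.
Qed.

Lemma prop2 (v1 v2 x1 x2 : C) : (v1 <> 0 \/ v2 <> 0) -> v1 * x2 - v2 * x1 = 0 ->
  exists mu, x1 = mu * v1 /\ x2 = mu * v2.
Proof.
  intros Hv Hd. destruct (classic (v1 = 0)) as [H1|H1].
  - destruct Hv as [|H2]; [contradiction|]. subst v1. exists (x2 / v2). split.
    + assert (v2 * x1 = 0). { replace (v2*x1) with (-(0 * x2 - v2 * x1)) by ring. rewrite Hd. ring. }
      destruct (C_integral H) as [|Hx]; [contradiction|]. rewrite Hx. ring.
    + field; auto.
  - exists (x1 / v1). split.
    + field; auto.
    + apply (Ceq_div H1). replace (x1 / v1 * v2 * v1) with (x1 * v2) by (field; auto).
      replace (x2 * v1) with (v1 * x2) by ring.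
      replace (v1 * x2) with (v1 * x2 - v2 * x1 + v2 * x1) by ring. rewrite Hd. ring.
Qed.

Lemma eig_nonscalar (A B C0 D : C) : ~ (B = 0 /\ C0 = 0 /\ A = D) ->
  exists l v1 v2 : C, (v1 <> 0 \/ v2 <> 0) /\ A * v1 + B * v2 = l * v1 /\ C0 * v1 + D * v2 = l * v2.
Proof.
  intro Hns.
  destruct (Csqrt_ex ((A - D) * (A - D) + 4 * B * C0)) as [s Hs].
  set (l := ((A + D) + s) / 2).
  assert (Hl : l * l - (A + D) * l + (A * D - B * C0) = 0).
  { unfold l. replace (((A + D + s) / 2) * ((A + D + s) / 2) - (A + D) * ((A + D + s) / 2) + (A * D - B * C0))
      with ((s * s - ((A - D) * (A - D) + 4 * B * C0)) / 4) by (field; try (cnz0)).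
    rewrite Hs. field; try (cnz0). }
  destruct (classic (B = 0)) as [HB|HB].
  - subst B. destruct (classic (C0 = 0)) as [HC|HC].
    + subst C0. exists A, 1, 0. split. left. cnz0.
      split; ring.
    + exists l, (l - D), C0. split. right; auto.
      split.
      * assert (E : (l - A) * (l - D) = 0) by (rewrite <- Hl; ring).
        replace (A * (l - D) + 0 * C0) with (l * (l - D) - (l - A) * (l - D)) by ring. rewrite E. ring.
      * ring.
  - exists l, B, (l - A). split. left; auto. split.
    + ring.
    + replace (C0 * B + D * (l - A)) with (l * (l - A) + (-(l * l - (A + D) * l + (A * D - B * C0)))) by ring.
      rewrite Hl. ring.
Qed.

Section Mat.
Variables (m11 m12 m21 m22 : R -> C) (a : R -> R) (p q : R).
Hypothesis Hp : (0 < p)%R.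
Hypothesis Hq : (0 < q)%R.
Hypothesis Ha : forall t, (0 < a t)%R.
Hypothesis Hamul : forall s t, a (s + t)%R = (a s * a t)%R.
Hypothesis H11 : forall s t, m11 (s + t)%R = m11 s * m11 t + m12 s * m21 t.
Hypothesis H12 : forall s t, m12 (s + t)%R = m11 s * m12 t + m12 s * m22 t.
Hypothesis H21 : forall s t, m21 (s + t)%R = m21 s * m11 t + m22 s * m21 t.
Hypothesis H22 : forall s t, m22 (s + t)%R = m21 s * m12 t + m22 s * m22 t.

Definition mv1 t (v1 v2 : C) := m11 t * v1 + m12 t * v2.
Definition mv2 t (v1 v2 : C) := m21 t * v1 + m22 t * v2.
Definition J (v1 v2 w1 w2 : C) := RtoC p * (v1 * Cconj w1) - RtoC q * (v2 * Cconj w2).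

Hypothesis HJ : forall t v1 v2 w1 w2,
  J (mv1 t v1 v2) (mv2 t v1 v2) (mv1 t w1 w2) (mv2 t w1 w2) = RtoC (/ a t) * J v1 v2 w1 w2.

Lemma mv1_hom s t v1 v2 : mv1 (s + t)%R v1 v2 = mv1 s (mv1 t v1 v2) (mv2 t v1 v2).
Proof. unfold mv1, mv2. rewrite H11, H12. ring. Qed.
Lemma mv2_hom s t v1 v2 : mv2 (s + t)%R v1 v2 = mv2 s (mv1 t v1 v2) (mv2 t v1 v2).
Proof. unfold mv1, mv2. rewrite H21, H22. ring. Qed.

Definition eigv t (v1 v2 : C) := exists l : C, mv1 t v1 v2 = l * v1 /\ mv2 t v1 v2 = l * v2.
Definition common (v1 v2 : C) := (v1 <> 0 \/ v2 <> 0) /\ forall t, eigv t v1 v2.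
Definition scalar t := m12 t = 0 /\ m21 t = 0 /\ m11 t = m22 t.

Lemma scalar_eig t v1 v2 : scalar t -> eigv t v1 v2.
Proof.
  intros [E1 [E2 E3]]. exists (m11 t). unfold mv1, mv2. rewrite E1, E2, <- E3. split; ring.
Qed.

Lemma common_exists : exists v1 v2 : C, common v1 v2.
Proof.
  destruct (classic (forall t, scalar t)) as [Hall|Hn].
  - exists 1, 0. split. left; cnz0. intro t. apply scalar_eig, Hall.
  - apply not_all_ex_not in Hn. destruct Hn as [t1 Ht1].
    destruct (@eig_nonscalar (m11 t1) (m12 t1) (m21 t1) (m22 t1) Ht1) as [l [v1 [v2 [Hv [E1 E2]]]]].
    exists v1, v2. split; auto. intro t.
    set (x1 := mv1 t v1 v2). set (x2 := mv2 t v1 v2).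
    assert (X1 : mv1 t1 x1 x2 = l * x1).
    { unfold x1, x2. rewrite <- mv1_hom, Rplus_comm, mv1_hom.
      change (mv1 t1 v1 v2 = l * v1) in E1. change (mv2 t1 v1 v2 = l * v2) in E2.
      rewrite E1, E2. unfold mv1. ring. }
    assert (X2 : mv2 t1 x1 x2 = l * x2).
    { unfold x1, x2. rewrite <- mv2_hom, Rplus_comm, mv2_hom.
      change (mv1 t1 v1 v2 = l * v1) in E1. change (mv2 t1 v1 v2 = l * v2) in E2.
      rewrite E1, E2. unfold mv2. ring. }
    destruct (classic (v1 * x2 - v2 * x1 = 0)) as [Hd|Hd].
    + destruct (prop2 Hv Hd) as [mu [M1 M2]]. exists mu. fold x1 x2. rewrite M1, M2. split; ring.
    + exfalso. apply Ht1.
      unfold mv1, mv2 in X1, X2.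
      destruct (@sys2 (m11 t1 - l) (m12 t1) v1 v2 x1 x2) as [R1 R2].
      { rewrite <- (Cplus_0_r (l * v1)) in E1 || idtac.
        replace ((m11 t1 - l) * v1 + m12 t1 * v2) with ((m11 t1 * v1 + m12 t1 * v2) - l * v1) by ring.
        rewrite E1. ring. }
      { replace ((m11 t1 - l) * x1 + m12 t1 * x2) with ((m11 t1 * x1 + m12 t1 * x2) - l * x1) by ring.
        rewrite X1. ring. }
      { exact Hd. }
      destruct (@sys2 (m21 t1) (m22 t1 - l) v1 v2 x1 x2) as [R3 R4].
      { replace (m21 t1 * v1 + (m22 t1 - l) * v2) with ((m21 t1 * v1 + m22 t1 * v2) - l * v2) by ring.
        rewrite E2. ring. }
      { replace (m21 t1 * x1 + (m22 t1 - l) * x2) with ((m21 t1 * x1 + m22 t1 * x2) - l * x2) by ring.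
        rewrite X2. ring. }
      { exact Hd. }
      split; [exact R2|]. split; [exact R3|].
      replace (m11 t1) with (m11 t1 - l + l) by ring. rewrite R1.
      replace (m22 t1) with (m22 t1 - l + l) by ring. rewrite R4. ring.
Qed.

Lemma Cconj_R (r : R) : Cconj (RtoC r) = RtoC r.
Proof. apply injective_projections; simpl; ring. Qed.

Lemma J_scal_l (l x1 x2 w1 w2 : C) : J (l * x1) (l * x2) w1 w2 = l * J x1 x2 w1 w2.
Proof. unfold J. ring. Qed.
Lemma J_scal_r (l x1 x2 w1 w2 : C) : J x1 x2 (l * w1) (l * w2) = Cconj l * J x1 x2 w1 w2.
Proof. unfold J. rewrite !Cmult_conj. ring. Qed.

Lemma eig_val t (w1 w2 l : C) : J w1 w2 w1 w2 <> 0 ->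
  mv1 t w1 w2 = l * w1 -> mv2 t w1 w2 = l * w2 ->
  l = J (mv1 t w1 w2) (mv2 t w1 w2) w1 w2 / J w1 w2 w1 w2.
Proof. intros Hn E1 E2. rewrite E1, E2, J_scal_l. field. auto. Qed.

Lemma eig_norm t (w1 w2 l : C) : J w1 w2 w1 w2 <> 0 ->
  mv1 t w1 w2 = l * w1 -> mv2 t w1 w2 = l * w2 -> l * Cconj l = RtoC (/ a t).
Proof.
  intros Hn E1 E2. pose proof (HJ t w1 w2 w1 w2) as E. rewrite E1, E2, J_scal_l, J_scal_r in E.
  apply (Ceq_div Hn). rewrite <- E. ring.
Qed.

Lemma eig_nz t (w1 w2 l : C) : J w1 w2 w1 w2 <> 0 ->
  mv1 t w1 w2 = l * w1 -> mv2 t w1 w2 = l * w2 -> l <> 0.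
Proof.
  intros Hn E1 E2 El. pose proof (eig_norm Hn E1 E2) as E. rewrite El in E.
  apply (f_equal fst) in E. simpl in E. pose proof (Ha t).
  assert (0 < / a t)%R by (apply Rinv_0_lt_compat; auto). lra.
Qed.

Section NonIso.
Variables v1 v2 : C.
Hypothesis Hc : common v1 v2.
Hypothesis HJv : J v1 v2 v1 v2 <> 0.

Definition u1 := RtoC q * Cconj v2.
Definition u2 := RtoC p * Cconj v1.

Lemma Juv : J u1 u2 v1 v2 = 0.
Proof. unfold J, u1, u2. ring. Qed.
Lemma Jxv_det (x1 x2 : C) : u1 * x2 - u2 * x1 = - J x1 x2 v1 v2.
Proof. unfold J, u1, u2. ring. Qed.
Lemma Juu : J u1 u2 u1 u2 = - (RtoC p * RtoC q) * J v1 v2 v1 v2.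
Proof. unfold J, u1, u2. rewrite !Cmult_conj, !Cconj_conj, !Cconj_R. ring. Qed.
Lemma detvu : v1 * u2 - v2 * u1 = J v1 v2 v1 v2.
Proof. unfold J, u1, u2. ring. Qed.

Lemma Juu_nz : J u1 u2 u1 u2 <> 0.
Proof.
  rewrite Juu. intro E. apply C_integral in E. destruct E as [E|E]; [|contradiction].
  apply (f_equal fst) in E. simpl in E. nra.
Qed.

Lemma u_nz : u1 <> 0 \/ u2 <> 0.
Proof.
  destruct (classic (u1 = 0)) as [E1|E1]; [|left; auto].
  destruct (classic (u2 = 0)) as [E2|E2]; [|right; auto].
  exfalso. apply HJv. rewrite <- detvu, E1, E2. ring.
Qed.

Definition alpha t := J (mv1 t v1 v2) (mv2 t v1 v2) v1 v2 / J v1 v2 v1 v2.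
Definition beta t := J (mv1 t u1 u2) (mv2 t u1 u2) u1 u2 / J u1 u2 u1 u2.

Lemma alpha_eig t : mv1 t v1 v2 = alpha t * v1 /\ mv2 t v1 v2 = alpha t * v2.
Proof.
  destruct (proj2 Hc t) as [l [E1 E2]].
  assert (l = alpha t) by (apply (eig_val HJv E1 E2)). subst l. auto.
Qed.

Lemma u_eig t : exists mu, mv1 t u1 u2 = mu * u1 /\ mv2 t u1 u2 = mu * u2.
Proof.
  destruct (alpha_eig t) as [E1 E2].
  assert (Hz : J (mv1 t u1 u2) (mv2 t u1 u2) v1 v2 = 0).
  { pose proof (HJ t u1 u2 v1 v2) as E. rewrite Juv, E1, E2, J_scal_r in E.
    replace (RtoC (/ a t) * 0) with (RtoC 0) in E by ring.
    apply C_integral in E. destruct E as [E|E]; auto. exfalso.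
    apply (eig_nz HJv E1 E2). rewrite <- (Cconj_conj (alpha t)), E.
    apply injective_projections; simpl; ring. }
  apply (prop2 u_nz). rewrite Jxv_det, Hz. ring.
Qed.

Lemma beta_eig t : mv1 t u1 u2 = beta t * u1 /\ mv2 t u1 u2 = beta t * u2.
Proof.
  destruct (u_eig t) as [l [E1 E2]].
  assert (l = beta t) by (apply (eig_val Juu_nz E1 E2)). subst l. auto.
Qed.

Lemma alpha_norm t : alpha t * Cconj (alpha t) = RtoC (/ a t).
Proof. destruct (alpha_eig t). apply (eig_norm HJv); auto. Qed.
Lemma beta_norm t : beta t * Cconj (beta t) = RtoC (/ a t).
Proof. destruct (beta_eig t). apply (eig_norm Juu_nz); auto. Qed.

Lemma alpha_hom s t : alpha (s + t)%R = alpha s * alpha t.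
Proof.
  destruct (alpha_eig t) as [E1 E2]. destruct (alpha_eig s) as [F1 F2].
  symmetry. apply (eig_val (t := (s+t)%R) HJv).
  - rewrite mv1_hom, E1, E2. transitivity (alpha t * mv1 s v1 v2). unfold mv1; ring. rewrite F1; ring.
  - rewrite mv2_hom, E1, E2. transitivity (alpha t * mv2 s v1 v2). unfold mv2; ring. rewrite F2; ring.
Qed.
Lemma beta_hom s t : beta (s + t)%R = beta s * beta t.
Proof.
  destruct (beta_eig t) as [E1 E2]. destruct (beta_eig s) as [F1 F2].
  symmetry. apply (eig_val (t := (s+t)%R) Juu_nz).
  - rewrite mv1_hom, E1, E2. transitivity (beta t * mv1 s u1 u2). unfold mv1; ring. rewrite F1; ring.
  - rewrite mv2_hom, E1, E2. transitivity (beta t * mv2 s u1 u2). unfold mv2; ring. rewrite F2; ring.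
Qed.

Definition rr t := alpha t * Cconj (beta t) * RtoC (a t).

Lemma rr_hom s t : rr (s + t)%R = rr s * rr t.
Proof. unfold rr. rewrite alpha_hom, beta_hom, Hamul, Cmult_conj. rewrite RtoC_mult. ring. Qed.

Lemma rr_unit t : rr t * Cconj (rr t) = 1.
Proof.
  unfold rr. rewrite !Cmult_conj, Cconj_conj, Cconj_R.
  replace (alpha t * Cconj (beta t) * RtoC (a t) * (Cconj (alpha t) * beta t * RtoC (a t)))
    with ((alpha t * Cconj (alpha t)) * (beta t * Cconj (beta t)) * RtoC (a t) * RtoC (a t)) by ring.
  rewrite alpha_norm, beta_norm. pose proof (Ha t).
  apply injective_projections; simpl; field; lra.
Qed.

Lemma rr_scalar t : rr t = 1 -> forall w1 w2 : C,
  mv1 t w1 w2 = alpha t * w1 /\ mv2 t w1 w2 = alpha t * w2.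
Proof.
  intro Hr.
  assert (Hab : alpha t = beta t).
  { pose proof (beta_norm t) as Bn. unfold rr in Hr.
    assert (Hat : RtoC (a t) <> 0) by (pose proof (Ha t); cnz0).
    assert (E : (alpha t - beta t) * (Cconj (beta t) * RtoC (a t)) = 0).
    { replace ((alpha t - beta t) * (Cconj (beta t) * RtoC (a t))) with
        (alpha t * Cconj (beta t) * RtoC (a t) - (beta t * Cconj (beta t)) * RtoC (a t)) by ring.
      rewrite Hr, Bn. pose proof (Ha t). apply injective_projections; simpl; field; lra. }
    apply C_integral in E. destruct E as [E|E].
    - replace (alpha t) with (alpha t - beta t + beta t) by ring. rewrite E. ring.
    - exfalso. apply C_integral in E. destruct E as [E|E]; [|contradiction].
      rewrite <- (Cconj_conj (beta t)), E in Bn. rewrite Cconj_R in Bn.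
      apply (f_equal fst) in Bn. simpl in Bn. pose proof (Ha t).
      assert (0 < / a t)%R by (apply Rinv_0_lt_compat; auto). lra. }
  destruct (alpha_eig t) as [E1 E2]. destruct (beta_eig t) as [F1 F2]. rewrite <- Hab in F1, F2.
  unfold mv1, mv2 in *.
  pose proof detvu as Hd. rewrite <- Hd in HJv.
  destruct (@sys2 (m11 t - alpha t) (m12 t) v1 v2 u1 u2) as [R1 R2].
  { replace ((m11 t - alpha t) * v1 + m12 t * v2) with ((m11 t * v1 + m12 t * v2) - alpha t * v1) by ring.
    rewrite E1. ring. }
  { replace ((m11 t - alpha t) * u1 + m12 t * u2) with ((m11 t * u1 + m12 t * u2) - alpha t * u1) by ring.
    rewrite F1. ring. }
  { exact HJv. }
  destruct (@sys2 (m21 t) (m22 t - alpha t) v1 v2 u1 u2) as [R3 R4].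
  { replace (m21 t * v1 + (m22 t - alpha t) * v2) with ((m21 t * v1 + m22 t * v2) - alpha t * v2) by ring.
    rewrite E2. ring. }
  { replace (m21 t * u1 + (m22 t - alpha t) * u2) with ((m21 t * u1 + m22 t * u2) - alpha t * u2) by ring.
    rewrite F2. ring. }
  { exact HJv. }
  intros w1 w2.
  replace (m11 t) with (m11 t - alpha t + alpha t) by ring. rewrite R1, R2.
  replace (m22 t) with (m22 t - alpha t + alpha t) by ring. rewrite R3, R4.
  split; ring.
Qed.

End NonIso.

Lemma iso_of_scalar : (forall t, scalar t) ->
  common (RtoC (sqrt q)) (RtoC (sqrt p)) /\ J (RtoC (sqrt q)) (RtoC (sqrt p)) (RtoC (sqrt q)) (RtoC (sqrt p)) = 0.
Proof.
  intro Hs. split.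
  - split. left. intro E. apply (f_equal fst) in E. simpl in E.
    pose proof (sqrt_lt_R0 q Hq). lra.
    intro t. apply scalar_eig, Hs.
  - unfold J. rewrite !Cconj_R, <- !RtoC_mult, <- RtoC_minus.
    rewrite <- !Rmult_assoc, !(Rmult_assoc _ (sqrt q) (sqrt q)), !(Rmult_assoc _ (sqrt p) (sqrt p)).
    rewrite !sqrt_sqrt by lra. f_equal. ring.
Qed.

End Mat.

Definition ccont (f : R -> C) := forall t, continuity_pt (fun s => fst (f s)) t /\ continuity_pt (fun s => snd (f s)) t.

Lemma ccont_const (c : C) : ccont (fun _ => c).
Proof. intro t. split; apply continuity_pt_const; intros x y; reflexivity. Qed.

Lemma ccont_R (f : R -> R) : continuity f -> ccont (fun s => RtoC (f s)).
Proof. intros Hf t. split; simpl. apply Hf. apply continuity_pt_const; intros x y; reflexivity. Qed.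

Lemma ccont_plus f g : ccont f -> ccont g -> ccont (fun s => f s + g s).
Proof.
  intros Hf Hg t. destruct (Hf t), (Hg t). split; simpl.
  apply (continuity_pt_plus (fun s => fst (f s)) (fun s => fst (g s))); auto.
  apply (continuity_pt_plus (fun s => snd (f s)) (fun s => snd (g s))); auto.
Qed.

Lemma ccont_mult f g : ccont f -> ccont g -> ccont (fun s => f s * g s).
Proof.
  intros Hf Hg t. destruct (Hf t) as [F1 F2], (Hg t) as [G1 G2]. split; simpl.
  - apply (continuity_pt_minus (fun s => (fst (f s) * fst (g s))%R) (fun s => (snd (f s) * snd (g s))%R));
    apply (continuity_pt_mult); auto.
  - apply (continuity_pt_plus (fun s => (fst (f s) * snd (g s))%R) (fun s => (snd (f s) * fst (g s))%R));
    apply (continuity_pt_mult); auto.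
Qed.

Lemma ccont_conj f : ccont f -> ccont (fun s => Cconj (f s)).
Proof.
  intros Hf t. destruct (Hf t). split; simpl; auto.
  apply (continuity_pt_opp (fun s => snd (f s))); auto.
Qed.

Lemma ccont_ext f g : (forall s, f s = g s) -> ccont f -> ccont g.
Proof.
  intros E Hf t. destruct (Hf t) as [F1 F2]. split.
  - eapply continuity_pt_ext; [|exact F1]. intro s. simpl. rewrite E. reflexivity.
  - eapply continuity_pt_ext; [|exact F2]. intro s. simpl. rewrite E. reflexivity.
Qed.

Lemma Cmod1_cases (z : C) : z * Cconj z = 1 -> fst z = 0%R -> z * z * (z * z) = 1.
Proof.
  destruct z as [x y]. intros E Hx. simpl in Hx. subst x.
  apply (f_equal fst) in E. simpl in E.
  apply injective_projections; simpl; nra.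
Qed.

Lemma find_period (r : R -> C) :
  (forall s t, r (s + t)%R = r s * r t) -> (forall t, r t * Cconj (r t) = 1) ->
  continuity (fun t => fst (r t)) -> (exists t0, r t0 <> 1) ->
  exists s, s <> 0%R /\ r s <> 1 /\ r (4 * s)%R = 1.
Proof.
  intros Hh Hu Hc [t0 Ht0].
  assert (Hre : forall t, (fst (r t) * fst (r t) + snd (r t) * snd (r t) = 1)%R).
  { intro t. specialize (Hu t). destruct (r t) as [x y]. apply (f_equal fst) in Hu. unfold Cmult, Cconj, RtoC in Hu; simpl in Hu. simpl. nra. }
  assert (Hr0 : r 0%R = 1).
  { pose proof (Hh 0%R 0%R) as E. rewrite Rplus_0_r in E.
    assert (E2 : r 0%R * (r 0%R * Cconj (r 0%R)) = r 0%R * r 0%R * Cconj (r 0%R)) by ring.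
    rewrite Hu, <- E, Hu in E2. rewrite <- E2. ring. }
  assert (Hsq : forall t, fst (r (2 * t)%R) = (2 * fst (r t) * fst (r t) - 1)%R).
  { intro t. replace (2 * t)%R with (t + t)%R by ring. rewrite Hh.
    pose proof (Hre t). destruct (r t) as [x y]. simpl in *. lra. }
  assert (Hneg : exists s, (fst (r s) <= 0)%R).
  { apply NNPP. intro Hn.
    assert (Hpos : forall s, (0 < fst (r s))%R) by (intro s; apply Rnot_le_lt; intro; apply Hn; exists s; auto).
    set (e := (1 - fst (r t0))%R).
    assert (He : (0 < e)%R).
    { unfold e. pose proof (Hre t0). destruct (Rle_or_lt 1 (fst (r t0))); [|lra].
      exfalso. apply Ht0. destruct (r t0) as [x y]. simpl in *.
      assert (y = 0%R) by nra. assert (x = 1%R) by nra. subst. reflexivity. }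
    assert (Hk : forall k : nat, ((INR k + 1) * e <= 1 - fst (r (2 ^ k * t0)%R))%R).
    { induction k.
      - simpl. replace (1 * t0)%R with t0 by ring. unfold e. lra.
      - rewrite S_INR. replace (2 ^ S k * t0)%R with (2 * (2 ^ k * t0))%R by (simpl; ring).
        rewrite Hsq. set (x := fst (r (2 ^ k * t0)%R)) in *.
        pose proof (Hpos (2 ^ k * t0)%R). fold x in H.
        pose proof (pos_INR k).
        assert (0 <= INR k * e)%R by (apply Rmult_le_pos; lra).
        assert (0 < 1 - x)%R by nra.
        assert (2*(1-x) <= 2 - 2*x*x)%R by nra.
        lra. }
    destruct (INR_archimed e 1 He) as [k Hk']. specialize (Hk k).
    pose proof (Hpos (2 ^ k * t0)%R). nra. }
  destruct Hneg as [s Hs].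
  assert (Hf0 : fst (r 0%R) = 1%R) by (rewrite Hr0; reflexivity).
  assert (Hz : exists z, z <> 0%R /\ fst (r z) = 0%R).
  { destruct (Req_dec (fst (r s)) 0) as [E|E].
    - exists s. split; auto. intro; subst. lra.
    - destruct (Rle_or_lt 0 s) as [Hs0|Hs0].
      + assert (Hs1 : (0 < s)%R) by (destruct Hs0; auto; subst; lra).
        destruct (IVT (fun t => - fst (r t))%R 0 s) as [z [Hz1 Hz2]].
        * intro x. apply continuity_pt_opp. apply Hc.
        * auto.
        * lra.
        * lra.
        * exists z. split. intro; subst; lra. lra.
      + destruct (IVT (fun t => fst (r t)) s 0) as [z [Hz1 Hz2]].
        * exact Hc.
        * auto.
        * lra.
        * lra.
        * exists z. split. intro; subst; lra. auto. }
  destruct Hz as [z [Hz0 Hz1]].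
  exists z. split; auto. split.
  - intro E. rewrite E in Hz1. simpl in Hz1. lra.
  - replace (4 * z)%R with (z + z + (z + z))%R by ring. rewrite !Hh.
    apply Cmod1_cases; auto.
Qed.

Lemma Cconj_nz (z : C) : z <> 0 -> Cconj z <> 0.
Proof. intros Hz E. apply Hz. rewrite <- (Cconj_conj z), E. apply injective_projections; simpl; ring. Qed.

Lemma zconj_nz (z : C) : z <> 0 -> z * Cconj z <> 0.
Proof. intro Hz. intro E. apply C_integral in E. destruct E; [contradiction|]. apply (Cconj_nz Hz); auto. Qed.

Lemma iso_prop (p q : R) (v1 v2 x1 x2 : C) : (0 < p)%R -> (0 < q)%R ->
  (v1 <> 0 \/ v2 <> 0) -> J p q v1 v2 v1 v2 = 0 -> J p q v1 v2 x1 x2 = 0 ->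
  exists mu, x1 = mu * v1 /\ x2 = mu * v2.
Proof.
  intros Hp Hq Hv E1 E2. unfold J in E1, E2.
  assert (Hpq : forall z : C, RtoC p * (z * Cconj z) = RtoC q * (z * Cconj z) -> True) by auto.
  assert (Hv2 : v2 <> 0).
  { intro Z. subst v2. destruct Hv as [Hv|Hv]; [|apply Hv; reflexivity].
    apply (zconj_nz Hv). apply (Ceq_div (v := RtoC p)). cnz0.
    replace (0 * RtoC p) with (RtoC p * (v1 * Cconj v1) - RtoC q * (0 * Cconj 0)).
    ring. rewrite E1. ring. }
  apply (prop2 Hv).
  apply (f_equal Cconj) in E2. rewrite Cminus_conj, !Cmult_conj, !Cconj_conj, !Cconj_R in E2.
  assert (E3 : RtoC q * Cconj v2 * (v2 * x1 - v1 * x2) = 0).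
  { replace (RtoC q * Cconj v2 * (v2 * x1 - v1 * x2)) with
      ((RtoC p * (v1 * Cconj v1) - RtoC q * (v2 * Cconj v2)) * (- x1) +
       (RtoC p * (Cconj v1 * x1) - RtoC q * (Cconj v2 * x2)) * v1) by ring.
    rewrite E1. replace (Cconj 0) with (RtoC 0) in E2 by (apply injective_projections; simpl; ring).
    rewrite E2. ring. }
  apply C_integral in E3. destruct E3 as [E3|E3].
  - exfalso. apply C_integral in E3. destruct E3 as [E3|E3].
    + apply (f_equal fst) in E3. simpl in E3. lra.
    + apply (Cconj_nz Hv2); auto.
  - replace (v1 * x2 - v2 * x1) with (- (v2 * x1 - v1 * x2)) by ring. rewrite E3. ring.
Qed.

End P6.
Import P6.

Module P5.
Local Open Scope R_scope.
Set Implicit Arguments.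
Local Open Scope R_scope.

Section Unit.
Context {H : HilbertSpace} (a b : R -> R) (U : R -> H -> H).
Implicit Types x y z f g w : H.
Hypothesis Hgrp : one_param_affine_subgroup a b.
Hypothesis Hrep : strongly_cont_unitary_rep a b U.

Lemma a_pos t : 0 < a t. Proof. apply Hgrp. Qed.
Lemma a_mul s t : a (s + t) = a s * a t. Proof. apply Hgrp. Qed.
Lemma b_mul s t : b (s + t) = a s * b t + b s. Proof. apply Hgrp. Qed.
Lemma a0 : a 0 = 1.
Proof. pose proof (a_mul 0 0). rewrite Rplus_0_r in H0. pose proof (a_pos 0). nra. Qed.
Lemma b0 : b 0 = 0.
Proof. pose proof (b_mul 0 0). rewrite Rplus_0_r, a0 in H0. lra. Qed.

Lemma U_add t x y : U t (hadd x y) = hadd (U t x) (U t y). Proof. apply (proj1 Hrep t). Qed.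
Lemma U_scal t (c : C) x : U t (hscal c x) = hscal c (U t x). Proof. apply (proj1 Hrep t). Qed.
Lemma U_inner t x y : hinner (U t x) (U t y) = hinner x y. Proof. apply (proj1 Hrep t). Qed.
Lemma U_comp s t x : U (s + t) x = U s (U t x). Proof. apply Hrep. Qed.
Lemma U_opp t x : U t (hopp x) = hopp (U t x). Proof. rewrite !hopp_scal. apply U_scal. Qed.
Lemma U_sub t x y : U t (hsub x y) = hsub (U t x) (U t y).
Proof. unfold hsub. rewrite U_add, U_opp. reflexivity. Qed.
Lemma U_zero t : U t hzero = hzero.
Proof. rewrite <- (hscal_zero_c hzero), U_scal, !hscal_zero_c. reflexivity. Qed.

Lemma U_inj t x y : U t x = U t y -> x = y.
Proof.
  intro E. apply sub_zero. apply hinner_definite. rewrite <- (U_inner t), U_sub, E, hsub_self.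
  apply hinner_zero_l.
Qed.

Lemma U0 x : U 0 x = x.
Proof.
  apply (U_inj (t:=0)). rewrite <- U_comp, Rplus_0_r. reflexivity.
Qed.

Lemma U_inv1 t x : U t (U (-t) x) = x.
Proof. rewrite <- U_comp, Rplus_opp_r. apply U0. Qed.
Lemma U_inv2 t x : U (-t) (U t x) = x.
Proof. rewrite <- U_comp, Rplus_opp_l. apply U0. Qed.

Lemma U_adj t : is_adjoint_of (U t) (U (-t)).
Proof.
  intros x y. rewrite <- (U_inv1 t y) at 1. rewrite U_inner. reflexivity.
Qed.

Lemma adj_unique_U t V y : is_adjoint_of (U t) V -> V y = U (-t) y.
Proof.
  intro HV. apply sub_zero. apply hinner_definite.
  assert (K : forall x, hinner x (hsub (V y) (U (-t) y)) = RtoC 0).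
  { intro x. unfold hsub. rewrite hinner_add_r, hinner_opp_r, <- HV, <- U_adj.
    apply injective_projections; simpl; ring. }
  apply K.
Qed.

Variable Ad : Operator H.
Hypothesis Hlin : linear_op Ad.
Hypothesis Hdense : densely_defined Ad.
Hypothesis Hclosed : closed_op Ad.
Hypothesis Hsym : symmetric_op Ad.
Hypothesis Hinv : invariant_on a b U (fun _ => True) Ad.

Lemma dom_U t x : dom Ad x -> dom Ad (U t x).
Proof. intro D. apply (@Hinv t I); auto. Qed.

Lemma app_U t x : dom Ad x ->
  U t (app Ad (U (-t) x)) = hadd (hscal (RtoC (a t)) (app Ad x)) (hscal (RtoC (b t)) x).
Proof. intro D. apply (proj2 (proj2 (@Hinv t I))); auto. apply U_adj. Qed.

Lemma Cinv_R (r : R) : r <> 0 -> Cinv (RtoC r) = RtoC (/ r).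
Proof. intro. apply injective_projections; simpl; field; auto. Qed.

Lemma Astar_U t y : Dstar Ad y ->
  adjoint_graph Ad (U t y) (U t (hscal (RtoC (/ a t)) (hsub (Astar Ad y) (hscal (RtoC (b t)) y)))).
Proof.
  intros Dy x Dx.
  set (x' := U (-t) x).
  assert (Dx' : dom Ad x') by (apply dom_U; auto).
  pose proof (app_U t x Dx) as E. fold x' in E.
  assert (Hat := a_pos t).
  assert (E2 : U (-t) (app Ad x) = hscal (RtoC (/ a t)) (hsub (app Ad x') (hscal (RtoC (b t)) x'))).
  { apply (U_inj (t:=t)). rewrite U_inv1, U_scal, U_sub, E, U_scal. unfold x'. rewrite U_inv1.
    apply vec_eq_of_inner. unfold hsub. hexpand.
    apply injective_projections; simpl; field; lra. }
  rewrite <- (U_inner (-t) (app Ad x) (U t y)), U_inv2.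
  rewrite <- (U_inner (-t) x (U t _)), U_inv2. fold x'.
  rewrite E2.
  pose proof (Astar_spec Dy _ Dx') as Ay.
  unfold hsub. hexpand. rewrite Ay.
  apply injective_projections; simpl; field; lra.
Qed.

Lemma Dstar_U t y : Dstar Ad y -> Dstar Ad (U t y).
Proof. intro Dy. eexists. apply Astar_U; auto. Qed.

Lemma Astar_U_eq t y : Dstar Ad y ->
  Astar Ad (U t y) = U t (hscal (RtoC (/ a t)) (hsub (Astar Ad y) (hscal (RtoC (b t)) y))).
Proof. intro Dy. apply (Astar_eq Hdense). apply Astar_U; auto. Qed.

Lemma om_U t f g : Dstar Ad f -> Dstar Ad g ->
  om Ad (U t f) (U t g) = Cmult (RtoC (/ a t)) (om Ad f g).
Proof.
  intros Df Dg. unfold om. rewrite !Astar_U_eq by auto. rewrite !U_inner.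
  unfold hsub. hexpand. apply injective_projections; simpl; ring.
Qed.

Variables vp vm : H.
Hypothesis Hvp0 : vp <> hzero.
Hypothesis Hvm0 : vm <> hzero.
Hypothesis Hvp : defect_space Ad Ci vp.
Hypothesis Hvm : defect_space Ad (Copp Ci) vm.
Hypothesis Hvpall : forall w, defect_space Ad Ci w -> exists c : C, w = hscal c vp.
Hypothesis Hvmall : forall w, defect_space Ad (Copp Ci) w -> exists c : C, w = hscal c vm.

Definition c1 f := co1 Ad vp f.
Definition c2 f := co2 Ad vm f.
Definition vec (v1 v2 : C) := hadd (hscal v1 vp) (hscal v2 vm).

Lemma Dvec v1 v2 : Dstar Ad (vec v1 v2).
Proof.
  unfold vec. apply Dstar_add; apply Dstar_scal; eexists; eassumption.
Qed.

Lemma vec_comb v1 v2 : vec v1 v2 = comb vp vm hzero v1 v2.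
Proof. unfold vec, comb. rewrite hadd_zero_l. reflexivity. Qed.

Lemma c1_vec v1 v2 : c1 (vec v1 v2) = v1.
Proof. unfold c1. rewrite vec_comb. apply (co1_comb Hdense Hsym); auto. apply (dom_zero Hlin). Qed.
Lemma c2_vec v1 v2 : c2 (vec v1 v2) = v2.
Proof. unfold c2. rewrite vec_comb. apply (co2_comb Hdense Hsym); auto. apply (dom_zero Hlin). Qed.

Lemma c_dom x : dom Ad x -> c1 x = RtoC 0 /\ c2 x = RtoC 0.
Proof. intro D. apply (co_dom Hdense Hsym); auto. Qed.

Lemma decompv f : Dstar Ad f -> dom Ad (hsub f (vec (c1 f) (c2 f))).
Proof. intro Df. apply (decomp Hlin Hdense Hclosed Hsym); auto. Qed.

Lemma c_zero_dom f : Dstar Ad f -> c1 f = RtoC 0 -> c2 f = RtoC 0 -> dom Ad f.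
Proof. intros. apply (co_zero_dom Hlin Hdense Hclosed Hsym Hvp0 Hvm0 Hvp Hvm Hvpall Hvmall); auto. Qed.

Lemma c1_add f g : Dstar Ad f -> Dstar Ad g -> c1 (hadd f g) = Cplus (c1 f) (c1 g).
Proof. intros. apply (co1_add Hdense); auto. Qed.
Lemma c2_add f g : Dstar Ad f -> Dstar Ad g -> c2 (hadd f g) = Cplus (c2 f) (c2 g).
Proof. intros. apply (co2_add Hdense); auto. Qed.
Lemma c1_scal (k : C) f : Dstar Ad f -> c1 (hscal k f) = Cmult k (c1 f).
Proof. intros. apply (co1_scal Hdense); auto. Qed.
Lemma c2_scal (k : C) f : Dstar Ad f -> c2 (hscal k f) = Cmult k (c2 f).
Proof. intros. apply (co2_scal Hdense); auto. Qed.

Definition Jf (v1 v2 w1 w2 : C) :=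
  Cminus (Cmult (Kp vp) (Cmult v1 (Cconj w1))) (Cmult (Km vm) (Cmult v2 (Cconj w2))).

Lemma om_c f g : Dstar Ad f -> Dstar Ad g ->
  om Ad f g = Cmult (Cmult (RtoC 2) Ci) (Jf (c1 f) (c2 f) (c1 g) (c2 g)).
Proof. intros. apply (om_coords Hlin Hdense Hclosed Hsym Hvp0 Hvm0 Hvp Hvm Hvpall Hvmall); auto. Qed.

(* matrix of U t on the quotient *)
Definition m11 t := c1 (U t vp).
Definition m21 t := c2 (U t vp).
Definition m12 t := c1 (U t vm).
Definition m22 t := c2 (U t vm).

Lemma Dvp' : Dstar Ad vp. Proof. eexists; eassumption. Qed.
Lemma Dvm' : Dstar Ad vm. Proof. eexists; eassumption. Qed.

Lemma c_U t f : Dstar Ad f ->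
  c1 (U t f) = Cplus (Cmult (m11 t) (c1 f)) (Cmult (m12 t) (c2 f)) /\
  c2 (U t f) = Cplus (Cmult (m21 t) (c1 f)) (Cmult (m22 t) (c2 f)).
Proof.
  intro Df. pose proof (decompv Df) as D.
  set (f0 := hsub f (vec (c1 f) (c2 f))) in *.
  assert (Ef : U t f = hadd (U t f0) (hadd (hscal (c1 f) (U t vp)) (hscal (c2 f) (U t vm)))).
  { unfold f0, vec. rewrite U_sub, U_add, !U_scal. vecsolve. }
  assert (D0 : dom Ad (U t f0)) by (apply dom_U; auto).
  assert (DU0 : Dstar Ad (U t f0)) by (apply (Dstar_dom Hsym); auto).
  assert (Dp : Dstar Ad (U t vp)) by (apply Dstar_U, Dvp').
  assert (Dm : Dstar Ad (U t vm)) by (apply Dstar_U, Dvm').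
  destruct (c_dom _ D0) as [Z1 Z2].
  rewrite Ef. unfold m11, m12, m21, m22.
  rewrite c1_add, c2_add, Z1, Z2, c1_add, c2_add, !c1_scal, !c2_scal; auto;
    try (apply Dstar_add); try (apply Dstar_scal); auto; try (apply Dstar_scal; auto).
  split; apply injective_projections; simpl; ring.
Qed.

Lemma Cfix1 (X : C) : Cmult (Cmult (RtoC (-/2)) Ci) (Cmult (Cmult (RtoC 2) Ci) X) = X.
Proof. destruct X. apply injective_projections; simpl; field. Qed.
Lemma Cfix2 (r : R) (X : C) :
  Cmult (Cmult (RtoC (-/2)) Ci) (Cmult (RtoC r) (Cmult (Cmult (RtoC 2) Ci) X)) = Cmult (RtoC r) X.
Proof. destruct X. apply injective_projections; simpl; field. Qed.

Lemma J_U t v1 v2 u1 u2 :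
  Jf (Cplus (Cmult (m11 t) v1) (Cmult (m12 t) v2)) (Cplus (Cmult (m21 t) v1) (Cmult (m22 t) v2))
     (Cplus (Cmult (m11 t) u1) (Cmult (m12 t) u2)) (Cplus (Cmult (m21 t) u1) (Cmult (m22 t) u2))
  = Cmult (RtoC (/ a t)) (Jf v1 v2 u1 u2).
Proof.
  pose proof (om_U t (Dvec v1 v2) (Dvec u1 u2)) as E.
  rewrite !om_c in E by (try apply Dstar_U; apply Dvec).
  destruct (c_U t (Dvec v1 v2)) as [A1 A2]. destruct (c_U t (Dvec u1 u2)) as [B1 B2].
  rewrite A1, A2, B1, B2, !c1_vec, !c2_vec in E.
  apply (f_equal (Cmult (Cmult (RtoC (-/2)) Ci))) in E.
  rewrite Cfix1, Cfix2 in E. exact E.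
Qed.


Lemma cont_eps (g : R -> R) t :
  (forall eps, 0 < eps -> exists d, 0 < d /\ forall s, Rabs (s - t) < d -> Rabs (g s - g t) < eps) ->
  continuity_pt g t.
Proof.
  intro Hg. unfold continuity_pt, continue_in, limit1_in, limit_in. simpl. unfold R_dist.
  intros eps He. destruct (Hg eps He) as [d [Hd Hs]]. exists d. split; auto. intros x [_ Hx]. auto.
Qed.

Lemma cont_inner x y : ccont (fun t => hinner (U t x) y).
Proof.
  intro t.
  assert (K : forall eps, 0 < eps -> exists d, 0 < d /\ forall s, Rabs (s - t) < d ->
      Cmod (Cminus (hinner (U s x) y) (hinner (U t x) y)) < eps).
  { intros eps He.
    destruct (proj2 (proj2 (proj2 Hrep)) x t (eps / (hnorm y + 1))) as [d [Hd Hs]].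
    { apply Rdiv_lt_0_compat; auto. pose proof (hnorm_ge0 y); lra. }
    exists d. split; auto. intros s Hst. specialize (Hs s Hst).
    replace (Cminus (hinner (U s x) y) (hinner (U t x) y)) with (hinner (hsub (U s x) (U t x)) y)
      by (unfold hsub; hexpand; apply injective_projections; simpl; ring).
    eapply Rle_lt_trans. apply CS.
    pose proof (hnorm_ge0 y). pose proof (hnorm_ge0 (hsub (U s x) (U t x))).
    apply Rle_lt_trans with (hnorm (hsub (U s x) (U t x)) * (hnorm y + 1)). nra.
    apply (Rmult_lt_compat_r (hnorm y + 1)) in Hs; [|lra].
    replace (eps / (hnorm y + 1) * (hnorm y + 1)) with eps in Hs by (field; lra). exact Hs. }
  split; apply cont_eps; intros eps He; destruct (K eps He) as [d [Hd Hs]]; exists d; split; auto;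
    intros s Hst; specialize (Hs s Hst).
  - pose proof (re_le_Cmod (Cminus (hinner (U s x) y) (hinner (U t x) y))). simpl in H0. simpl. unfold Rminus. lra.
  - pose proof (Rmax_Cmod (Cminus (hinner (U s x) y) (hinner (U t x) y))).
    pose proof (Rmax_r (Rabs (fst (Cminus (hinner (U s x) y) (hinner (U t x) y))))
      (Rabs (snd (Cminus (hinner (U s x) y) (hinner (U t x) y))))).
    simpl in *. unfold Rminus. lra.
Qed.

Lemma om_cont w : Dstar Ad w -> ccont (fun t => om Ad (U t w) w).
Proof.
  intro Dw.
  apply (ccont_ext (f := fun t => Cminus
      (Cmult (RtoC (/ a t)) (Cminus (hinner (U t (Astar Ad w)) w) (Cmult (RtoC (b t)) (hinner (U t w) w))))
      (hinner (U t w) (Astar Ad w)))).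
  { intro t. unfold om. rewrite Astar_U_eq by auto. rewrite U_scal, U_sub, U_scal.
    unfold hsub. hexpand. apply injective_projections; simpl; ring. }
  unfold Cminus.
  apply ccont_plus.
  - apply ccont_mult.
    + apply ccont_R. intro t. apply continuity_pt_inv. apply Hgrp. pose proof (a_pos t). lra.
    + apply ccont_plus. apply cont_inner.
      apply (ccont_ext (f := fun t => Cmult (RtoC (-1)) (Cmult (RtoC (b t)) (hinner (U t w) w)))).
      { intro t. apply injective_projections; simpl; ring. }
      apply ccont_mult. apply ccont_const. apply ccont_mult. apply ccont_R. apply Hgrp. apply cont_inner.
  - apply (ccont_ext (f := fun t => Cmult (RtoC (-1)) (hinner (U t w) (Astar Ad w)))).
    { intro t. apply injective_projections; simpl; ring. }
    apply ccont_mult. apply ccont_const. apply cont_inner.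
Qed.

End Unit.

End P5.
Import P5.

Module P7.
Local Open Scope R_scope.
Set Implicit Arguments.
Local Open Scope R_scope.

Section Fin.
Context {H : HilbertSpace} (a b : R -> R) (U : R -> H -> H) (Ad : Operator H).
Implicit Types x y z f g w : H.
Hypothesis Hgrp : one_param_affine_subgroup a b.
Hypothesis Hrep : strongly_cont_unitary_rep a b U.
Hypothesis Hlin : linear_op Ad.
Hypothesis Hdense : densely_defined Ad.
Hypothesis Hclosed : closed_op Ad.
Hypothesis Hsym : symmetric_op Ad.
Hypothesis Hinv : invariant_on a b U (fun _ => True) Ad.
Variables vp vm : H.
Hypothesis Hvp0 : vp <> hzero.
Hypothesis Hvm0 : vm <> hzero.
Hypothesis Hvp : defect_space Ad Ci vp.
Hypothesis Hvm : defect_space Ad (Copp Ci) vm.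
Hypothesis Hvpall : forall w, defect_space Ad Ci w -> exists c : C, w = hscal c vp.
Hypothesis Hvmall : forall w, defect_space Ad (Copp Ci) w -> exists c : C, w = hscal c vm.

Let cU := c_U Hgrp Hrep Hlin Hdense Hclosed Hsym Hinv Hvp0 Hvm0 Hvp Hvm Hvpall Hvmall.
Let cdom := c_dom Hdense Hsym Hvp0 Hvm0 Hvp Hvm.
Let czd := c_zero_dom Hlin Hdense Hclosed Hsym Hvp0 Hvm0 Hvp Hvm Hvpall Hvmall.
Let c1a := c1_add Hdense Hvp0.
Let c2a := c2_add Hdense Hvm0.
Let c1s := c1_scal Hdense Hvp0.
Let c2s := c2_scal Hdense Hvm0.
Let omc := om_c Hlin Hdense Hclosed Hsym Hvp0 Hvm0 Hvp Hvm Hvpall Hvmall.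
Let c1v := c1_vec Hlin Hdense Hsym Hvp0 Hvp Hvm.
Let c2v := c2_vec Hlin Hdense Hsym Hvm0 Hvp Hvm.
Let Dv := Dvec Hvp Hvm.

Ltac dst := repeat first [ assumption | apply Dv | apply Dstar_scal | apply Dstar_add | apply Dstar_sub
  | apply (Dstar_U Hgrp Hrep Hinv) | apply (Dstar_dom Hsym); assumption ].

Notation M11 := (m11 U Ad vp).
Notation M12 := (m12 U Ad vp vm).
Notation M21 := (m21 U Ad vp vm).
Notation M22 := (m22 U Ad vm).

Lemma DU t f : Dstar Ad f -> Dstar Ad (U t f).
Proof. apply (Dstar_U Hgrp Hrep Hinv). Qed.

Lemma c1_sub f g : Dstar Ad f -> Dstar Ad g -> P5.c1 Ad vp (hsub f g) = Cminus (P5.c1 Ad vp f) (P5.c1 Ad vp g).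
Proof.
  intros. unfold hsub. rewrite hopp_scal, c1a, c1s; auto. apply injective_projections; simpl; ring.
  apply Dstar_scal; auto.
Qed.
Lemma c2_sub f g : Dstar Ad f -> Dstar Ad g -> c2 Ad vm (hsub f g) = Cminus (c2 Ad vm f) (c2 Ad vm g).
Proof.
  intros. unfold hsub. rewrite hopp_scal, c2a, c2s; auto. apply injective_projections; simpl; ring.
  apply Dstar_scal; auto.
Qed.

Lemma scalar_action t (l : C) :
  (forall w1 w2 : C, mv1 M11 M12 t w1 w2 = Cmult l w1 /\ mv2 M21 M22 t w1 w2 = Cmult l w2) ->
  forall f, Dstar Ad f -> dom Ad (hsub (U t f) (hscal l f)).
Proof.
  intros Hs f Df.
  assert (D1 : Dstar Ad (U t f)) by (apply DU; auto).
  assert (D2 : Dstar Ad (hscal l f)) by (apply Dstar_scal; auto).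
  apply czd. apply Dstar_sub; auto.
  - rewrite c1_sub, c1s by auto. destruct (cU t Df) as [E1 _]. rewrite E1.
    destruct (Hs (P5.c1 Ad vp f) (c2 Ad vm f)) as [S1 _]. unfold mv1 in S1. rewrite S1.
    apply injective_projections; simpl; ring.
  - rewrite c2_sub, c2s by auto. destruct (cU t Df) as [_ E2]. rewrite E2.
    destruct (Hs (P5.c1 Ad vp f) (c2 Ad vm f)) as [_ S2]. unfold mv2 in S2. rewrite S2.
    apply injective_projections; simpl; ring.
Qed.

Lemma dom_inv_scalar (A : Operator H) t (l : C) : linear_op A -> op_le Ad A -> op_le_adjoint A Ad ->
  (forall f, Dstar Ad f -> dom Ad (hsub (U t f) (hscal l f))) ->
  forall f, dom A f -> dom A (U t f).
Proof.
  intros LA [le1 le2] Hadj Hs f Df.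
  assert (Dsf : Dstar Ad f) by (exists (app A f); apply Hadj; auto).
  replace (U t f) with (hadd (hsub (U t f) (hscal l f)) (hscal l f)) by vecsolve.
  apply LA. apply le1, Hs; auto. apply LA; auto.
Qed.

Lemma inv_clause (A : Operator H) t : linear_op A -> op_le Ad A -> op_le_adjoint A Ad ->
  (forall f, dom A f -> dom A (U t f)) -> (forall f, dom A f -> dom A (U (-t) f)) ->
  (forall f, dom A f -> dom A (U t f)) /\
  (forall f, dom A f -> exists g, dom A g /\ U t g = f) /\
  (forall V, is_adjoint_of (U t) V -> forall f, dom A f ->
     U t (app A (V f)) = hadd (hscal (RtoC (a t)) (app A f)) (hscal (RtoC (b t)) f)).
Proof.
  intros LA Hle Hadj Hd1 Hd2. split; auto. split.
  - intros f Df. exists (U (-t) f). split; auto. apply (U_inv1 Hrep).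
  - intros V HV f Df. rewrite (adj_unique_U Hrep t f HV).
    set (y := U (-t) f).
    assert (Dy : dom A y) by (apply Hd2; auto).
    assert (DAy : Dstar Ad y) by (exists (app A y); apply Hadj; auto).
    assert (E1 : app A y = Astar Ad y) by (symmetry; apply (Astar_eq Hdense); apply Hadj; auto).
    assert (E2 : app A f = Astar Ad f) by (symmetry; apply (Astar_eq Hdense); apply Hadj; auto).
    rewrite E1, E2.
    pose proof (Astar_U_eq Hgrp Hrep Hdense Hinv t DAy) as E.
    assert (Uy : U t y = f) by apply (U_inv1 Hrep). rewrite Uy in E.
    rewrite E. rewrite (U_scal Hrep), (U_sub Hrep), (U_scal Hrep), Uy.
    pose proof (a_pos Hgrp t).
    apply vec_eq_of_inner. unfold hsub. hexpand.
    apply injective_projections; simpl; field; lra.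
Qed.


Lemma Jf_J v1 v2 u1 u2 : Jf vp vm v1 v2 u1 u2 = J (nsq vp) (nsq vm) v1 v2 u1 u2.
Proof. unfold Jf, J, Kp, Km. rewrite (hinner_self_real vp), (hinner_self_real vm). reflexivity. Qed.

Lemma nsq_pos w : w <> hzero -> 0 < nsq w.
Proof. intro Hw. pose proof (nsq_ge0 w). destruct (Req_dec (nsq w) 0); [|lra]. exfalso. apply Hw, nsq_zero; auto. Qed.

Section Iso.
Variables v1 v2 : C.
Hypothesis Hv : v1 <> RtoC 0 \/ v2 <> RtoC 0.
Hypothesis Hiso : J (nsq vp) (nsq vm) v1 v2 v1 v2 = RtoC 0.
Hypothesis Heig : forall t, exists l : C, mv1 M11 M12 t v1 v2 = Cmult l v1 /\ mv2 M21 M22 t v1 v2 = Cmult l v2.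

Notation w := (vec vp vm v1 v2).
Definition Bdom f := exists x0 (k : C), dom Ad x0 /\ f = hadd x0 (hscal k w).
Definition Bop : Operator H := {| dom := Bdom; app := Astar Ad |}.

Lemma Bdom_Dstar f : Bdom f -> Dstar Ad f.
Proof.
  intros [x0 [k [D ->]]]. apply Dstar_add. apply (Dstar_dom Hsym); auto. apply Dstar_scal, Dv.
Qed.

Lemma Bdom_c f : Bdom f -> exists k : C, P5.c1 Ad vp f = Cmult k v1 /\ c2 Ad vm f = Cmult k v2.
Proof.
  intros [x0 [k [D ->]]]. exists k.
  assert (Dx : Dstar Ad x0) by (apply (Dstar_dom Hsym); auto).
  destruct (cdom _ D) as [Z1 Z2].
  rewrite c1a, c2a, c1s, c2s, Z1, Z2, c1v, c2v by dst.
  split; apply injective_projections; simpl; ring.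
Qed.

Lemma B_lin : linear_op Bop.
Proof.
  split; [|split; [|split; [|split]]]; simpl.
  - exists hzero, (RtoC 0). split. apply (dom_zero Hlin). rewrite hscal_zero_c, hadd_zero. reflexivity.
  - intros x y [x0 [k [D1 ->]]] [y0 [k' [D2 ->]]]. exists (hadd x0 y0), (Cplus k k'). split.
    apply (dom_add Hlin); auto. vecsolve.
  - intros c x [x0 [k [D1 ->]]]. exists (hscal c x0), (Cmult c k). split.
    apply (dom_scal Hlin); auto. vecsolve.
  - intros x y Dx Dy. apply (Astar_add Hdense); apply Bdom_Dstar; auto.
  - intros c x Dx. apply (Astar_scal Hdense); apply Bdom_Dstar; auto.
Qed.

Lemma B_le : op_le Ad Bop.
Proof.
  split; simpl.
  - intros x D. exists x, (RtoC 0). split; auto. rewrite hscal_zero_c, hadd_zero. reflexivity.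
  - intros x D. apply (Astar_dom Hdense Hsym); auto.
Qed.

Lemma J_scal_both (k k' : C) : J (nsq vp) (nsq vm) (Cmult k v1) (Cmult k v2) (Cmult k' v1) (Cmult k' v2)
  = Cmult (Cmult k (Cconj k')) (J (nsq vp) (nsq vm) v1 v2 v1 v2).
Proof. unfold J. rewrite !Cmult_conj. apply injective_projections; simpl; ring. Qed.

Lemma B_sa : self_adjoint Bop.
Proof.
  split; [apply B_lin|]. split.
  - intros x eps He. destruct (Hdense x He) as [y [Dy Hy]]. exists y. split; auto. apply B_le; auto.
  - intros y z. split.
    + intro Hadj.
      assert (Ha : adjoint_graph Ad y z).
      { intros x Dx. rewrite <- (Astar_dom Hdense Hsym x Dx). apply (Hadj x). apply B_le; auto. }
      assert (Dy : Dstar Ad y) by (exists z; auto).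
      assert (Ez : Astar Ad y = z) by (apply (Astar_eq Hdense); auto).
      assert (Bw : Bdom w).
      { exists hzero, (RtoC 1). split. apply (dom_zero Hlin). rewrite hscal_one, hadd_zero_l. reflexivity. }
      specialize (Hadj w Bw). simpl in Hadj. rewrite <- Ez in Hadj.
      assert (Eom : om Ad w y = RtoC 0).
      { unfold om. rewrite Hadj. apply injective_projections; simpl; ring. }
      rewrite omc in Eom by dst. rewrite c1v, c2v, Jf_J in Eom.
      assert (Jz : J (nsq vp) (nsq vm) v1 v2 (P5.c1 Ad vp y) (c2 Ad vm y) = RtoC 0).
      { apply C_integral in Eom. destruct Eom as [E|E]; auto. exfalso.
        apply (f_equal snd) in E. simpl in E. lra. }
      destruct (iso_prop (nsq_pos Hvp0) (nsq_pos Hvm0) Hv Hiso Jz) as [mu [M1 M2]].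
      split; auto. simpl.
      exists (hsub y (hscal mu w)), mu. split.
      * apply czd. apply Dstar_sub; auto. apply Dstar_scal, Dv.
        rewrite c1_sub, c1s, c1v, M1 by dst. apply injective_projections; simpl; ring.
        rewrite c2_sub, c2s, c2v, M2 by dst. apply injective_projections; simpl; ring.
      * vecsolve.
    + intros [Dy Ez] x Dx. simpl in *.
      assert (Dx' := Bdom_Dstar Dx). assert (Dy' := Bdom_Dstar Dy).
      rewrite <- Ez.
      destruct (Bdom_c Dx) as [k [K1 K2]]. destruct (Bdom_c Dy) as [k' [K1' K2']].
      assert (Eom : om Ad x y = RtoC 0).
      { rewrite omc by auto. rewrite K1, K2, K1', K2', Jf_J, J_scal_both, Hiso.
        apply injective_projections; simpl; ring. }
      unfold om in Eom. apply (f_equal (fun c => Cplus c (hinner x (Astar Ad y)))) in Eom.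
      replace (Cplus (Cminus (hinner (Astar Ad x) y) (hinner x (Astar Ad y))) (hinner x (Astar Ad y)))
        with (hinner (Astar Ad x) y) in Eom by (apply injective_projections; simpl; ring).
      rewrite Eom. apply injective_projections; simpl; ring.
Qed.

Lemma B_dom_inv t f : Bdom f -> Bdom (U t f).
Proof.
  intros [x0 [k [D ->]]]. destruct (Heig t) as [l [E1 E2]].
  set (d := hsub (U t w) (hscal l w)).
  assert (Dd : dom Ad d).
  { unfold d. apply czd. apply Dstar_sub. apply DU, Dv. apply Dstar_scal, Dv.
    - rewrite c1_sub, c1s, c1v by dst.
      destruct (cU t (Dv v1 v2)) as [F1 _]. rewrite F1, c1v, c2v.
      unfold mv1 in E1. rewrite E1. apply injective_projections; simpl; ring.
    - rewrite c2_sub, c2s, c2v by dst.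
      destruct (cU t (Dv v1 v2)) as [_ F2]. rewrite F2, c1v, c2v.
      unfold mv2 in E2. rewrite E2. apply injective_projections; simpl; ring. }
  exists (hadd (U t x0) (hscal k d)), (Cmult k l). split.
  - apply (dom_add Hlin). apply (dom_U Hinv); auto. apply (dom_scal Hlin); auto.
  - rewrite (U_add Hrep), (U_scal Hrep). unfold d. vecsolve.
Qed.

Lemma B_inv : invariant_on a b U (fun _ => True) Bop.
Proof.
  intros t _. apply inv_clause.
  - apply B_lin.
  - apply B_le.
  - intros y Dy. simpl. apply Astar_spec. apply Bdom_Dstar; auto.
  - intros f Df. apply B_dom_inv; auto.
  - intros f Df. apply B_dom_inv; auto.
Qed.

Lemma iso_contra : exists B : Operator H, op_le Ad B /\ self_adjoint B /\ invariant_on a b U (fun _ => True) B.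
Proof. exists Bop. split. apply B_le. split. apply B_sa. apply B_inv. Qed.

End Iso.

End Fin.

End P7.
Import P7.

Module P8.
Local Open Scope R_scope.
Set Implicit Arguments.
Local Open Scope R_scope.

Section Main.
Context {H : HilbertSpace} (a b : R -> R) (U : R -> H -> H) (Ad : Operator H).
Implicit Types x y f g w : H.
Hypothesis Hgrp : one_param_affine_subgroup a b.
Hypothesis Hrep : strongly_cont_unitary_rep a b U.
Hypothesis Hlin : linear_op Ad.
Hypothesis Hdense : densely_defined Ad.
Hypothesis Hclosed : closed_op Ad.
Hypothesis Hsym : symmetric_op Ad.
Hypothesis Hinv : invariant_on a b U (fun _ => True) Ad.
Variables vp vm : H.
Hypothesis Hvp0 : vp <> hzero.
Hypothesis Hvm0 : vm <> hzero.
Hypothesis Hvp : defect_space Ad Ci vp.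
Hypothesis Hvm : defect_space Ad (Copp Ci) vm.
Hypothesis Hvpall : forall w, defect_space Ad Ci w -> exists c : C, w = hscal c vp.
Hypothesis Hvmall : forall w, defect_space Ad (Copp Ci) w -> exists c : C, w = hscal c vm.
Hypothesis Hno : ~ (exists B : Operator H, op_le Ad B /\ self_adjoint B /\
        invariant_on a b U (fun _ => True) B).

Let cU := c_U Hgrp Hrep Hlin Hdense Hclosed Hsym Hinv Hvp0 Hvm0 Hvp Hvm Hvpall Hvmall.
Let c1v := c1_vec Hlin Hdense Hsym Hvp0 Hvp Hvm.
Let c2v := c2_vec Hlin Hdense Hsym Hvm0 Hvp Hvm.
Let Dv := Dvec Hvp Hvm.

Notation M11 := (m11 U Ad vp).
Notation M12 := (m12 U Ad vp vm).
Notation M21 := (m21 U Ad vp vm).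
Notation M22 := (m22 U Ad vm).
Notation p := (nsq vp).
Notation q := (nsq vm).

Lemma Hp : 0 < p. Proof. apply nsq_pos; auto. Qed.
Lemma Hq : 0 < q. Proof. apply nsq_pos; auto. Qed.
Lemma Ha t : 0 < a t. Proof. apply (a_pos Hgrp). Qed.
Lemma Hamul s t : a (s + t) = a s * a t. Proof. apply (a_mul Hgrp). Qed.

Lemma DUvp t : Dstar Ad (U t vp).
Proof. apply (Dstar_U Hgrp Hrep Hinv). eexists; eassumption. Qed.
Lemma DUvm t : Dstar Ad (U t vm).
Proof. apply (Dstar_U Hgrp Hrep Hinv). eexists; eassumption. Qed.

Lemma HH11 s t : M11 (s + t) = Cplus (Cmult (M11 s) (M11 t)) (Cmult (M12 s) (M21 t)).
Proof. unfold m11 at 1. rewrite (U_comp Hrep). apply (cU s (DUvp t)). Qed.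
Lemma HH21 s t : M21 (s + t) = Cplus (Cmult (M21 s) (M11 t)) (Cmult (M22 s) (M21 t)).
Proof. unfold m21 at 1. rewrite (U_comp Hrep). apply (cU s (DUvp t)). Qed.
Lemma HH12 s t : M12 (s + t) = Cplus (Cmult (M11 s) (M12 t)) (Cmult (M12 s) (M22 t)).
Proof. unfold m12 at 1. rewrite (U_comp Hrep). apply (cU s (DUvm t)). Qed.
Lemma HH22 s t : M22 (s + t) = Cplus (Cmult (M21 s) (M12 t)) (Cmult (M22 s) (M22 t)).
Proof. unfold m22 at 1. rewrite (U_comp Hrep). apply (cU s (DUvm t)). Qed.

Lemma HJJ t v1 v2 z1 z2 :
  J p q (mv1 M11 M12 t v1 v2) (mv2 M21 M22 t v1 v2) (mv1 M11 M12 t z1 z2) (mv2 M21 M22 t z1 z2)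
  = Cmult (RtoC (/ a t)) (J p q v1 v2 z1 z2).
Proof.
  rewrite <- !Jf_J. unfold mv1, mv2.
  apply (J_U Hgrp Hrep Hlin Hdense Hclosed Hsym Hinv Hvp0 Hvm0 Hvp Hvm Hvpall Hvmall).
Qed.

Lemma mv_U t v1 v2 : mv1 M11 M12 t v1 v2 = P5.c1 Ad vp (U t (vec vp vm v1 v2)) /\
  mv2 M21 M22 t v1 v2 = c2 Ad vm (U t (vec vp vm v1 v2)).
Proof.
  destruct (cU t (Dv v1 v2)) as [E1 E2]. rewrite E1, E2, c1v, c2v. split; reflexivity.
Qed.

Lemma J_om t v1 v2 z1 z2 :
  J p q (mv1 M11 M12 t v1 v2) (mv2 M21 M22 t v1 v2) z1 z2 =
  Cmult (Cmult (RtoC (-/2)) Ci) (om Ad (U t (vec vp vm v1 v2)) (vec vp vm z1 z2)).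
Proof.
  rewrite (om_c Hlin Hdense Hclosed Hsym Hvp0 Hvm0 Hvp Hvm Hvpall Hvmall).
  2: apply (Dstar_U Hgrp Hrep Hinv); apply Dv. 2: apply Dv.
  destruct (mv_U t v1 v2) as [E1 E2]. rewrite E1, E2, c1v, c2v, Jf_J. rewrite Cfix1. reflexivity.
Qed.

Lemma iso_case v1 v2 : (v1 <> RtoC 0 \/ v2 <> RtoC 0) -> J p q v1 v2 v1 v2 = RtoC 0 ->
  (forall t, exists l : C, mv1 M11 M12 t v1 v2 = Cmult l v1 /\ mv2 M21 M22 t v1 v2 = Cmult l v2) -> False.
Proof.
  intros Hv Hiso Heig. apply Hno.
  apply (iso_contra Hgrp Hrep Hlin Hdense Hclosed Hsym Hinv Hvp0 Hvm0 Hvp Hvm Hvpall Hvmall Hv Hiso Heig).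
Qed.


Lemma r0_one (r : R -> C) : (forall s t, r (s + t) = Cmult (r s) (r t)) ->
  (forall t, Cmult (r t) (Cconj (r t)) = RtoC 1) -> r 0 = RtoC 1.
Proof.
  intros Hh Hu. pose proof (Hh 0 0) as E. rewrite Rplus_0_r in E.
  rewrite <- (Hu 0). transitivity (Cmult (r 0) (Cmult (r 0) (Cconj (r 0)))).
  rewrite Hu. apply injective_projections; simpl; ring.
  transitivity (Cmult (Cmult (r 0) (r 0)) (Cconj (r 0))).
  apply injective_projections; simpl; ring. rewrite <- E. reflexivity.
Qed.

Lemma r_int (r : R -> C) (T : R) : (forall s t, r (s + t) = Cmult (r s) (r t)) ->
  (forall t, Cmult (r t) (Cconj (r t)) = RtoC 1) -> r T = RtoC 1 ->
  forall n : Z, r (IZR n * T) = RtoC 1.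
Proof.
  intros Hh Hu HT. apply Z.peano_ind.
  - rewrite Rmult_0_l. apply r0_one; auto.
  - intros n IH. rewrite succ_IZR, Rmult_plus_distr_r, Rmult_1_l, Hh, IH, HT.
    apply injective_projections; simpl; ring.
  - intros n IH. rewrite <- IH. replace (IZR n * T) with (IZR (Z.pred n) * T + T).
    rewrite Hh, HT. apply injective_projections; simpl; ring.
    rewrite <- Z.sub_1_r, minus_IZR. simpl. ring.
Qed.

Lemma a4 (x : R) : 0 < x -> x * x * (x * x) = 1 -> x = 1.
Proof. intros. assert (x * x = 1) by nra. nra. Qed.

Theorem main_conc : exists t0 : R, (a t0 <> 1%R \/ b t0 <> 0%R) /\
    forall A : Operator H, maximal_dissipative A -> op_le Ad A -> op_le_adjoint A Ad ->
      invariant_on a b U (cyclic_params t0) A.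
Proof.
  destruct (common_exists M11 M12 M21 M22 HH11 HH12 HH21 HH22) as [v1 [v2 Hc]].
  destruct (classic (J p q v1 v2 v1 v2 = RtoC 0)) as [Hiso|HJv].
  { exfalso. apply (iso_case (proj1 Hc) Hiso). intro t. apply (proj2 Hc t). }
  set (rrf := rr M11 M12 M21 M22 a p q v1 v2).
  pose proof (rr_hom a Hp Hq Ha Hamul HH11 HH12 HH21 HH22 HJJ Hc HJv) as Rh.
  pose proof (rr_unit a Hp Hq Ha HJJ Hc HJv) as Ru.
  pose proof (@rr_scalar M11 M12 M21 M22 a p q Hp Hq Ha HJJ v1 v2 Hc HJv) as Rs.
  destruct (classic (forall t, rrf t = RtoC 1)) as [Hall|Hn].
  { exfalso.
    assert (Hsc : forall t, scalar M11 M12 M21 M22 t).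
    { intro t. destruct (Rs t (Hall t) (RtoC 1) (RtoC 0)) as [A1 A2].
      destruct (Rs t (Hall t) (RtoC 0) (RtoC 1)) as [B1 B2].
      unfold mv1, mv2 in *.
      split; [|split].
      - transitivity (Cplus (Cmult (M11 t) (RtoC 0)) (Cmult (M12 t) (RtoC 1))).
        apply injective_projections; simpl; ring. rewrite B1. apply injective_projections; simpl; ring.
      - transitivity (Cplus (Cmult (M21 t) (RtoC 1)) (Cmult (M22 t) (RtoC 0))).
        apply injective_projections; simpl; ring. rewrite A2. apply injective_projections; simpl; ring.
      - transitivity (Cplus (Cmult (M11 t) (RtoC 1)) (Cmult (M12 t) (RtoC 0))).
        apply injective_projections; simpl; ring. rewrite A1.
        transitivity (Cplus (Cmult (M21 t) (RtoC 0)) (Cmult (M22 t) (RtoC 1))).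
        2: apply injective_projections; simpl; ring. rewrite B2.
        apply injective_projections; simpl; ring. }
    destruct (iso_of_scalar Hp Hq Hsc) as [Hc2 Hiso2].
    apply (iso_case (proj1 Hc2) Hiso2). intro t. apply (proj2 Hc2 t). }
  apply not_all_ex_not in Hn.
  assert (Hcont : continuity (fun t => fst (rrf t))).
  { assert (Cc : ccont rrf).
    { unfold rrf, rr. apply ccont_mult. apply ccont_mult.
      - unfold alpha, Cdiv.
        apply (ccont_ext (f := fun t => Cmult (Cmult (Cmult (RtoC (-/2)) Ci)
           (om Ad (U t (vec vp vm v1 v2)) (vec vp vm v1 v2))) (Cinv (J p q v1 v2 v1 v2)))).
        { intro t. rewrite J_om. reflexivity. }
        apply ccont_mult; [|apply ccont_const]. apply ccont_mult; [apply ccont_const|].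
        apply (om_cont Hgrp Hrep Hdense Hinv). apply Dv.
      - apply ccont_conj. unfold beta, Cdiv.
        apply (ccont_ext (f := fun t => Cmult (Cmult (Cmult (RtoC (-/2)) Ci)
           (om Ad (U t (vec vp vm (u1 q v2) (u2 p v1))) (vec vp vm (u1 q v2) (u2 p v1))))
           (Cinv (J p q (u1 q v2) (u2 p v1) (u1 q v2) (u2 p v1))))).
        { intro t. rewrite J_om. reflexivity. }
        apply ccont_mult; [|apply ccont_const]. apply ccont_mult; [apply ccont_const|].
        apply (om_cont Hgrp Hrep Hdense Hinv). apply Dv.
      - apply ccont_R. apply Hgrp. }
    intro t. apply (proj1 (Cc t)). }
  destruct (find_period rrf Rh Ru Hcont Hn) as [s [Hs0 [Hs1 Hs4]]].
  exists (4 * s). split.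
  - apply NNPP. intro Hab. apply not_or_and in Hab. destruct Hab as [Ha4 Hb4].
    apply NNPP in Ha4. apply NNPP in Hb4.
    assert (Has : a s = 1).
    { apply a4. apply Ha. rewrite <- Ha4. replace (4 * s) with ((s + s) + (s + s)) by ring.
      rewrite !Hamul. ring. }
    assert (Hbs : b s = 0).
    { replace (4 * s) with ((s + s) + (s + s)) in Hb4 by ring.
      rewrite !(b_mul Hgrp), !Hamul, Has in Hb4. lra. }
    assert (HU : U s = U 0).
    { apply (proj1 (proj2 Hrep)). rewrite (a0 Hgrp); auto. rewrite (b0 Hgrp); auto. }
    assert (Hid : forall z1 z2, mv1 M11 M12 s z1 z2 = z1 /\ mv2 M21 M22 s z1 z2 = z2).
    { intros z1 z2. destruct (mv_U s z1 z2) as [E1 E2]. rewrite E1, E2, HU, (U0 Hrep), c1v, c2v.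
      split; reflexivity. }
    assert (Hone : forall (l w1' w2' : C), (w1' <> RtoC 0 \/ w2' <> RtoC 0) ->
        w1' = Cmult l w1' -> w2' = Cmult l w2' -> l = RtoC 1).
    { intros l w1' w2' Hw E1 E2. destruct Hw as [Hw|Hw].
      - symmetry. apply (Ceq_div Hw). rewrite <- E1. apply injective_projections; simpl; ring.
      - symmetry. apply (Ceq_div Hw). rewrite <- E2. apply injective_projections; simpl; ring. }
    assert (Al : alpha M11 M12 M21 M22 p q v1 v2 s = RtoC 1).
    { destruct (alpha_eig Hc HJv s) as [E1 E2]. destruct (Hid v1 v2) as [I1 I2].
      apply (Hone _ v1 v2 (proj1 Hc)). rewrite <- E1 at 1. rewrite I1. reflexivity.
      rewrite <- E2 at 1. rewrite I2. reflexivity. }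
    assert (Be : beta M11 M12 M21 M22 p q v1 v2 s = RtoC 1).
    { destruct (beta_eig a Hp Hq Ha HJJ Hc HJv s) as [E1 E2].
      destruct (Hid (u1 q v2) (u2 p v1)) as [I1 I2].
      apply (Hone _ (u1 q v2) (u2 p v1) (u_nz HJv)). rewrite <- E1 at 1. rewrite I1. reflexivity.
      rewrite <- E2 at 1. rewrite I2. reflexivity. }
    apply Hs1. unfold rrf, rr. rewrite Al, Be, Has. apply injective_projections; simpl; ring.
  - intros A Hmd Hle Hadj t [n ->].
    assert (LA : linear_op A) by apply (proj1 (proj1 Hmd)).
    pose proof (r_int rrf (4*s) Rh Ru Hs4) as Ri.
    assert (Dinv : forall t', rrf t' = RtoC 1 -> forall f, dom A f -> dom A (U t' f)).
    { intros t' Ht'.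
      apply (dom_inv_scalar U t' (alpha M11 M12 M21 M22 p q v1 v2 t') LA Hle Hadj).
      apply (scalar_action Hgrp Hrep Hlin Hdense Hclosed Hsym Hinv Hvp0 Hvm0 Hvp Hvm Hvpall Hvmall).
      apply Rs. exact Ht'. }
    apply (inv_clause Hgrp Hrep Hdense Hinv (IZR n * (4 * s)) LA Hle Hadj).
    + apply Dinv. apply Ri.
    + apply Dinv. replace (- (IZR n * (4 * s))) with (IZR (- n) * (4 * s)) by (rewrite opp_IZR; ring).
      apply Ri.
Qed.

End Main.

End P8.
Import P8.

Theorem theorem6p5 (H : HilbertSpace) (a b : R -> R) (U : R -> H -> H)
  (Adot : Operator H) :
  one_param_affine_subgroup a b ->
  strongly_cont_unitary_rep a b U ->
  linear_op Adot -> densely_defined Adot -> closed_op Adot -> symmetric_op Adot ->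
  deficiency_indices_1_1 Adot ->
  invariant_on a b U (fun _ => True) Adot ->
  ~ (exists B : Operator H, op_le Adot B /\ self_adjoint B /\
        invariant_on a b U (fun _ => True) B) ->
  exists t0 : R, (a t0 <> 1%R \/ b t0 <> 0%R) /\
    forall A : Operator H, maximal_dissipative A -> op_le Adot A -> op_le_adjoint A Adot ->
      invariant_on a b U (cyclic_params t0) A.
Proof.
  intros Hgrp Hrep Hlin Hdense Hclosed Hsym [[vp [Hvp0 [Hvp Hvpall]]] [vm [Hvm0 [Hvm Hvmall]]]] Hinv Hno.
  apply (@main_conc H a b U Adot Hgrp Hrep Hlin Hdense Hclosed Hsym Hinv vp vm Hvp0 Hvm0 Hvp Hvm
    (fun w Hw => proj1 (Hvpall w) Hw) (fun w Hw => proj1 (Hvmall w) Hw) Hno).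
Qed.
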